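(* Let $s_\beta$ be the base phi sum of digits function, and let $I_\beta$, $C_\beta$, $D_\beta$ (indexed from $1$) be the increasing enumerations of the points of increase, constancy, and decrease of $s_\beta$, respectively. Then: (i) $I_\beta(1)=0$, and $\Delta I_\beta$ is the fixed point of the morphism on $\{1,2,4\}$ given by $1\mapsto12$, $2\mapsto4$, $4\mapsto1244$; (ii) $C_\beta(1)=2$, and $\Delta C_\beta$ is the image under the letter-to-letter projection $1\mapsto1$, $2\mapsto2$, $3\mapsto3$, $3'\mapsto3$, $4\mapsto4$ of the fixed point (starting with $2$) of the morphism on $\{1,2,3,3',4\}$ given by $1\mapsto43$, $2\mapsto21$, $3\mapsto21$, $3'\mapsto13'43$, $4\mapsto13'4$; (iii) $D_\beta(1)=6$, and $\Delta D_\beta$ is the shift by one (i.e. the word obtained by deleting the first letter) of the fixed point of the morphism on $\{2,4,5,7\}$ given by $2\mapsto542$, $4\mapsto542$, $5\mapsto7$, $7\mapsto7542$.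
   Context: Let $\varphi=(1+\sqrt5)/2$. Every natural number $N$ can be written uniquely (ignoring leading and trailing zeros) as a finite sum $N=\sum_i d_i\varphi^i$ over integers $i$ (possibly negative), with $d_i\in\{0,1\}$ and no two consecutive digits both equal to $1$; $s_\beta(N)$ is the number of digits $1$, with $s_\beta(0)=0$. $N\ge0$ is a point of increase, constancy, or decrease of $s_\beta$ according as $s_\beta(N+1)-s_\beta(N)$ is $>0$, $=0$, or $<0$. For a sequence $V=(V(n))_{n\ge1}$, $\Delta V=(V(n+1)-V(n))_{n\ge1}$, viewed as an infinite word. The fixed point of a morphism $\mu$ starting with a letter $a$ (where $\mu(a)$ begins with $a$ and has length $\ge2$) is $\lim_n\mu^n(a)$; in (i) it starts with $1$, in (ii) with $2$, and in (iii) with $7$. *)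

(* Defs.v *)
From Stdlib Require Import Reals ZArith List ClassicalEpsilon.
Import ListNotations.
Open Scope R_scope.

Definition phi : R := (1 + sqrt 5) / 2.

(** A base-phi expansion is encoded by the (strictly increasing) list of
    exponents i at which the digit d_i equals 1.  No two consecutive
    digits equal to 1 means consecutive exponents differ by at least 2. *)
Fixpoint gapped (l : list Z) : Prop :=
  match l with
  | [] => True
  | i :: t => match t with
              | [] => True
              | j :: _ => (i + 2 <= j)%Z /\ gapped t
              end
  end.

Fixpoint phi_value (l : list Z) : R :=
  match l with
  | [] => 0
  | i :: t => powerRZ phi i + phi_value t
  end.

Definition is_phi_rep (N : nat) (l : list Z) : Prop :=
  gapped l /\ phi_value l = INR N.

Definition s_beta (N : nat) : nat :=
  length (epsilon (inhabits (@nil Z)) (is_phi_rep N)).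

Definition incp (N : nat) : bool := Nat.ltb (s_beta N) (s_beta (S N)).
Definition conp (N : nat) : bool := Nat.eqb (s_beta (S N)) (s_beta N).
Definition decp (N : nat) : bool := Nat.ltb (s_beta (S N)) (s_beta N).

Fixpoint count_below (P : nat -> bool) (n : nat) : nat :=
  match n with
  | 0 => 0
  | S m => count_below P m + (if P m then 1 else 0)
  end.

(** Increasing enumeration of {N | P N}, indexed from 1:
    enum1 P n is the N with P N such that exactly n-1 smaller m satisfy P. *)
Definition enum1 (P : nat -> bool) (n : nat) : nat :=
  epsilon (inhabits 0%nat)
    (fun N => P N = true /\ count_below P N = (n - 1)%nat).

Definition I_beta : nat -> nat := enum1 incp.
Definition C_beta : nat -> nat := enum1 conp.
Definition D_beta : nat -> nat := enum1 decp.

(** Delta V as an infinite word indexed from 0: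
    (Delta V)(k) = V(k+2) - V(k+1), i.e. position k holds V(n+1)-V(n) for n = k+1. *)
Definition DeltaW (V : nat -> nat) (k : nat) : Z :=
  (Z.of_nat (V (S (S k))) - Z.of_nat (V (S k)))%Z.

Definition morph_apply {A : Type} (mu : A -> list A) (w : list A) : list A :=
  flat_map mu w.

Fixpoint morph_iter {A : Type} (mu : A -> list A) (n : nat) (w : list A) : list A :=
  match n with
  | 0 => w
  | S m => morph_apply mu (morph_iter mu m w)
  end.

(** Fixed point lim_n mu^n(a), as an infinite word indexed from 0.
    For a non-erasing mu with mu(a) beginning with a and |mu(a)| >= 2,
    mu^n(a) is a prefix of mu^(n+1)(a) and has length >= n+1, so letter i
    of the limit is letter i of mu^(i+1)(a). *)
Definition fixpt {A : Type} (mu : A -> list A) (a : A) (i : nat) : A :=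
  nth i (morph_iter mu (S i) [a]) a.

Definition mu_I (x : nat) : list nat :=
  match x with
  | 1 => [1; 2]%nat
  | 2 => [4]%nat
  | 4 => [1; 2; 4; 4]%nat
  | _ => [x]
  end.

Inductive letC := C1 | C2 | C3 | C3' | C4.

Definition mu_C (x : letC) : list letC :=
  match x with
  | C1 => [C4; C3]
  | C2 => [C2; C1]
  | C3 => [C2; C1]
  | C3' => [C1; C3'; C4; C3]
  | C4 => [C1; C3'; C4]
  end.

Definition proj_C (x : letC) : nat :=
  match x with
  | C1 => 1 | C2 => 2 | C3 => 3 | C3' => 3 | C4 => 4
  end.

Definition mu_D (x : nat) : list nat :=
  match x with
  | 2 => [5; 4; 2]%nat
  | 4 => [5; 4; 2]%nat
  | 5 => [7]%nat
  | 7 => [7; 5; 4; 2]%nat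
  | _ => [x]
  end.

(* Main.v *)
Require Import Defs.
From Stdlib Require Import Reals ZArith List Lia Lra ClassicalEpsilon.
Import ListNotations.

Local Close Scope nat_scope.
Local Open Scope R_scope.

Lemma sqrt5_sq : sqrt 5 * sqrt 5 = 5.
Proof. apply sqrt_sqrt. lra. Qed.

Lemma sqrt5_pos : 2 < sqrt 5.
Proof.
  assert (H: sqrt 4 = 2). { replace 4 with (2*2) by lra. apply sqrt_square. lra. }
  rewrite <- H. apply sqrt_lt_1; lra.
Qed.

Lemma phi_gt1 : 1 < phi.
Proof. unfold phi. pose proof sqrt5_pos. lra. Qed.

Lemma phi_sq : phi * phi = phi + 1.
Proof. unfold phi. pose proof sqrt5_sq. nra. Qed.

Lemma phi_neq0 : phi <> 0.
Proof. pose proof phi_gt1. lra. Qed.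

Definition pw (z : Z) : R := powerRZ phi z.

Lemma pw_pos z : 0 < pw z.
Proof. unfold pw. apply powerRZ_lt. pose proof phi_gt1. lra. Qed.

Lemma pw_add a b : pw (a + b) = pw a * pw b.
Proof. unfold pw. apply powerRZ_add. apply phi_neq0. Qed.

Lemma pw_1 : pw 1 = phi.
Proof. unfold pw. simpl. ring. Qed.

Lemma pw_rec z : pw (z + 2) = pw (z + 1) + pw z.
Proof.
  rewrite !pw_add. replace (pw 2) with (phi * phi).
  - rewrite pw_1, phi_sq. ring.
  - unfold pw. simpl. ring.
Qed.

Lemma pw_rec3 a b c : (b = a + 1)%Z -> (c = a + 2)%Z -> pw c = pw b + pw a.
Proof. intros -> ->. apply pw_rec. Qed.

Lemma pw_ge1 (n : nat) : 1 <= pw (Z.of_nat n).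
Proof.
  induction n.
  - unfold pw. simpl. lra.
  - rewrite Nat2Z.inj_succ. unfold Z.succ. rewrite pw_add, pw_1.
    pose proof phi_gt1. nra.
Qed.

Lemma pw_mono a b : (a <= b)%Z -> pw a <= pw b.
Proof.
  intros H. replace b with (a + Z.of_nat (Z.to_nat (b - a)))%Z by lia.
  rewrite pw_add. pose proof (pw_ge1 (Z.to_nat (b-a))). pose proof (pw_pos a). nra.
Qed.

Lemma pw_lt a b : (a < b)%Z -> pw a < pw b.
Proof.
  intros H. replace b with ((a + 1) + Z.of_nat (Z.to_nat (b - a - 1)))%Z by lia.
  rewrite !pw_add, pw_1. pose proof (pw_ge1 (Z.to_nat (b-a-1))). pose proof (pw_pos a).
  pose proof phi_gt1.
  assert (pw a < pw a * phi) by nra.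
  assert (pw a * phi <= pw a * phi * pw (Z.of_nat (Z.to_nat (b - a - 1)))) by nra.
  lra.
Qed.

Fixpoint Luc (n : nat) : nat :=
  match n with
  | O => 2%nat
  | S m => match m with O => 1%nat | S p => (Luc m + Luc p)%nat end
  end.

Lemma Luc_SS n : Luc (S (S n)) = (Luc (S n) + Luc n)%nat.
Proof. reflexivity. Qed.

Lemma Luc_real n : INR (Luc n) = pw (Z.of_nat n) + (-1) ^ n * pw (- Z.of_nat n).
Proof.
  induction n as [n IH] using (well_founded_induction lt_wf).
  destruct n as [|[|n]].
  - simpl. unfold pw. simpl. lra.
  - simpl. unfold pw. simpl. rewrite !Rmult_1_r.
    pose proof phi_sq. pose proof phi_neq0.
    assert (/phi = phi - 1). { apply (Rmult_eq_reg_l phi); auto. rewrite Rinv_r; auto. nra. }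
    rewrite H1. lra.
  - rewrite Luc_SS, plus_INR, (IH (S n)), (IH n) by lia.
    assert (E1: pw (Z.of_nat (S (S n))) = pw (Z.of_nat (S n)) + pw (Z.of_nat n))
      by (apply pw_rec3; lia).
    assert (E2: pw (- Z.of_nat n) = pw (- Z.of_nat (S n)) + pw (- Z.of_nat (S (S n))))
      by (apply pw_rec3; lia).
    rewrite E1, E2. simpl. ring.
Qed.

Lemma Luc_even n : INR (Luc (2 * n)) = pw (2 * Z.of_nat n) + pw (- (2 * Z.of_nat n)).
Proof.
  rewrite Luc_real. rewrite pow_1_even. rewrite Nat2Z.inj_mul. simpl (Z.of_nat 2). ring.
Qed.

Lemma Luc_odd n : INR (Luc (2 * n + 1)) = pw (2 * Z.of_nat n + 1) - pw (- (2 * Z.of_nat n + 1)).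
Proof.
  rewrite Luc_real. replace (2 * n + 1)%nat with (S (2 * n)) by lia. rewrite pow_1_odd.
  replace (Z.of_nat (S (2 * n))) with (2 * Z.of_nat n + 1)%Z by lia. ring.
Qed.

Local Close Scope nat_scope.
Local Open Scope R_scope.

Lemma pv_cons i t : phi_value (i :: t) = pw i + phi_value t.
Proof. reflexivity. Qed.

Lemma pv_app l1 l2 : phi_value (l1 ++ l2) = phi_value l1 + phi_value l2.
Proof. induction l1; simpl; [ring|]. rewrite IHl1. ring. Qed.

Lemma pv_nonneg l : 0 <= phi_value l.
Proof. induction l; simpl; [lra|]. pose proof (pw_pos a). unfold pw in *. lra. Qed.

Lemma pv_ge_in x l : In x l -> pw x <= phi_value l.
Proof.
  induction l; simpl; [tauto|]. intros [->|H].
  - pose proof (pv_nonneg l). unfold pw in *. lra.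
  - pose proof (IHl H). pose proof (pw_pos a). unfold pw in *. lra.
Qed.

Fixpoint Gb (a b : Z) (l : list Z) : Prop :=
  match l with
  | [] => True
  | x :: t => (a <= x <= b)%Z /\ Gb (x + 2) b t
  end.

Lemma Gb_weak a b a' b' l : Gb a b l -> (a' <= a)%Z -> (b <= b')%Z -> Gb a' b' l.
Proof.
  revert a a'. induction l; simpl; auto. intros x x' [H1 H2] H3 H4. split; [lia|].
  eapply IHl; eauto. lia.
Qed.

Lemma Gb_gapped a b l : Gb a b l -> gapped l.
Proof.
  revert a. induction l as [|x t IH]; simpl; auto. intros a [H1 H2].
  destruct t as [|y t']; auto. simpl in H2. destruct H2 as [H3 H4]. split; [lia|].
  apply (IH (x+2)%Z). simpl. auto.
Qed.

Lemma Gb_app a b c l1 l2 : Gb a b l1 -> Gb (b + 2) c l2 -> (a <= b + 2)%Z -> (b <= c)%Z ->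
  Gb a c (l1 ++ l2).
Proof.
  revert a. induction l1 as [|x t IH]; simpl; intros a H1 H2 H3 H4.
  - eapply Gb_weak; eauto; lia.
  - destruct H1 as [H5 H6]. split; [lia|]. apply IH; auto. lia.
Qed.

Lemma Gb_ub l : forall a b, Gb a b l -> (a <= b + 2)%Z -> phi_value l <= pw (b + 1) - pw (a - 1).
Proof.
  induction l as [|x t IH]; simpl; intros a b H H0.
  - pose proof (pw_mono (a-1) (b+1) ltac:(lia)). lra.
  - destruct H as [[H1 H2] H3]. specialize (IH (x+2)%Z b H3 ltac:(lia)).
    replace (x + 2 - 1)%Z with (x + 1)%Z in IH by lia.
    assert (E: pw (x+1) = pw x + pw (x - 1)) by (apply pw_rec3; lia).
    pose proof (pw_mono (a-1) (x-1) ltac:(lia)). fold (pw x). lra.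
Qed.

Lemma gapped_Gb x t : gapped (x :: t) -> Gb x (last (x :: t) 0%Z) (x :: t).
Proof.
  revert x. induction t as [|y t IH]; intros x H.
  - simpl. lia.
  - simpl in H. destruct H as [H1 H2]. specialize (IH y H2).
    change (last (x :: y :: t) 0%Z) with (last (y :: t) 0%Z) in *.
    assert (y <= last (y :: t) 0)%Z by (destruct IH as [IH1 _]; lia).
    split; [lia|]. eapply Gb_weak; eauto; lia.
Qed.

Lemma gapped_app_l l M : gapped (l ++ [M]) -> gapped l.
Proof.
  induction l as [|x t IH]; simpl; auto. intros H.
  destruct t as [|y t']; [simpl; auto|]. simpl in H. destruct H as [H1 H2]. split; [exact H1|]. apply IH. exact H2.
Qed.

Lemma gapped_last_bound l M : gapped (l ++ [M]) -> phi_value (l ++ [M]) < pw (M + 1).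
Proof.
  intros H. destruct l as [|x t].
  - simpl. assert (pw M < pw (M+1)) by (apply pw_lt; lia). unfold pw in *. lra.
  - pose proof (gapped_Gb x (t ++ [M]) H) as G.
    rewrite app_comm_cons in G. rewrite last_last in G.
    assert (x <= M)%Z by (destruct G as [G1 _]; lia).
    pose proof (Gb_ub _ _ _ G ltac:(lia)). pose proof (pw_pos (x-1)).
    lra.
Qed.

Lemma rep_unique_n n : forall l1 l2, (length l1 + length l2 <= n)%nat ->
  gapped l1 -> gapped l2 -> phi_value l1 = phi_value l2 -> l1 = l2.
Proof.
  induction n as [|n IH]; intros l1 l2 Hn G1 G2 HV.
  - destruct l1, l2; simpl in Hn; try lia. auto.
  - destruct l1 as [|x1 t1] eqn:E1; destruct l2 as [|x2 t2] eqn:E2; auto.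
    + exfalso. rewrite <- E2 in HV. assert (In x2 l2) by (subst; left; auto).
      pose proof (pv_ge_in _ _ H). pose proof (pw_pos x2). simpl in HV. lra.
    + exfalso. rewrite <- E1 in HV. assert (In x1 l1) by (subst; left; auto).
      pose proof (pv_ge_in _ _ H). pose proof (pw_pos x1). simpl in HV. lra.
    + rewrite <- E1, <- E2 in *.
      destruct (exists_last (l := l1) ltac:(subst; discriminate)) as [l1' [M1 H1]].
      destruct (exists_last (l := l2) ltac:(subst; discriminate)) as [l2' [M2 H2]].
      clear E1 E2. subst l1 l2.
      pose proof (gapped_last_bound _ _ G1). pose proof (gapped_last_bound _ _ G2).
      assert (In M1 (l1' ++ [M1])) by (apply in_or_app; right; left; auto).
      assert (In M2 (l2' ++ [M2])) by (apply in_or_app; right; left; auto).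
      pose proof (pv_ge_in _ _ H1). pose proof (pv_ge_in _ _ H2).
      assert (M1 = M2).
      { destruct (Z.lt_trichotomy M1 M2) as [Hl|[He|Hl]]; auto; exfalso.
        - pose proof (pw_mono (M1+1) M2 ltac:(lia)). lra.
        - pose proof (pw_mono (M2+1) M1 ltac:(lia)). lra. }
      subst M2. rewrite !pv_app in HV. f_equal. apply IH.
      * rewrite !length_app in Hn. simpl in Hn. lia.
      * eapply gapped_app_l; eauto.
      * eapply gapped_app_l; eauto.
      * lra.
Qed.

Lemma rep_unique l1 l2 : gapped l1 -> gapped l2 -> phi_value l1 = phi_value l2 -> l1 = l2.
Proof. intros. eapply rep_unique_n; eauto. Qed.

Lemma s_beta_eq N l : is_phi_rep N l -> s_beta N = length l.
Proof.
  intros H. unfold s_beta.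
  pose proof (epsilon_spec (inhabits (@nil Z)) (is_phi_rep N) (ex_intro _ l H)) as H'.
  set (e := epsilon _ _) in *. destruct H as [G V], H' as [G' V'].
  rewrite (rep_unique e l); auto. congruence.
Qed.

Local Close Scope nat_scope.
Local Open Scope R_scope.

Lemma pv_nil : phi_value [] = 0.
Proof. reflexivity. Qed.

Lemma pw_eq a b : a = b -> pw a = pw b.
Proof. intros ->; reflexivity. Qed.

Lemma Luc_even_gen n k a b : k = (2 * n)%nat -> a = (2 * Z.of_nat n)%Z -> b = (- (2 * Z.of_nat n))%Z ->
  INR (Luc k) = pw a + pw b.
Proof. intros -> -> ->. apply Luc_even. Qed.

Lemma Luc_odd_gen n k a b : k = (2 * n + 1)%nat -> a = (2 * Z.of_nat n + 1)%Z -> b = (- (2 * Z.of_nat n + 1))%Z ->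
  INR (Luc k) = pw a - pw b.
Proof. intros -> -> ->. apply Luc_odd. Qed.

Lemma Luc_pos n : (1 <= Luc n)%nat.
Proof.
  induction n as [n IH] using (well_founded_induction lt_wf).
  destruct n as [|[|n]]; simpl; try lia. pose proof (IH (S n) ltac:(lia)). simpl in H. lia.
Qed.

Lemma Luc_succ_lt n : (1 <= n)%nat -> (Luc n < Luc (S n))%nat.
Proof.
  intros H. destruct n as [|n]; [lia|]. rewrite Luc_SS. pose proof (Luc_pos n). lia.
Qed.

Lemma Luc_lt a b : (1 <= a)%nat -> (a < b)%nat -> (Luc a < Luc b)%nat.
Proof.
  intros Ha Hab. induction b as [|b IH]; [lia|].
  destruct (Nat.eq_dec a b) as [->|Hne].
  - apply Luc_succ_lt; auto.
  - pose proof (IH ltac:(lia)). pose proof (Luc_succ_lt b ltac:(lia)). lia.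
Qed.

Lemma Luc_le a b : (1 <= a)%nat -> (a <= b)%nat -> (Luc a <= Luc b)%nat.
Proof.
  intros Ha Hab. destruct (Nat.eq_dec a b) as [->|]; [lia|]. pose proof (Luc_lt a b Ha ltac:(lia)). lia.
Qed.

Lemma block_exists N : (1 <= N)%nat -> exists k, (1 <= k)%nat /\ (Luc k <= N < Luc (S k))%nat.
Proof.
  induction N as [|N IH]; intros H; [lia|].
  destruct (Nat.eq_dec N 0) as [->|HN].
  - exists 1%nat. simpl. lia.
  - destruct (IH ltac:(lia)) as [k [Hk [H1 H2]]].
    destruct (Nat.eq_dec (S N) (Luc (S k))) as [E|E].
    + exists (S k). split; [lia|]. pose proof (Luc_succ_lt (S k) ltac:(lia)). lia.
    + exists k. lia.
Qed.

Fixpoint alt (s : Z) (k : nat) : list Z :=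
  match k with O => [] | S k' => s :: alt (s + 2) k' end.

Lemma alt_len s k : length (alt s k) = k.
Proof. revert s; induction k; simpl; auto. Qed.

Lemma alt_value s k : phi_value (alt s k) = pw (s + 2 * Z.of_nat k - 1) - pw (s - 1).
Proof.
  revert s; induction k as [|k IH]; intros s.
  - cbn [alt phi_value]. rewrite (pw_eq (s + 2 * Z.of_nat 0 - 1) (s - 1)) by lia. ring.
  - simpl alt. rewrite pv_cons, IH.
    rewrite (pw_eq (s + 2 + 2 * Z.of_nat k - 1) (s + 2 * Z.of_nat (S k) - 1)) by lia.
    rewrite (pw_eq (s + 2 - 1) (s + 1)) by lia.
    assert (pw (s + 1) = pw s + pw (s - 1)) by (apply pw_rec3; lia). lra.
Qed.

Lemma alt_Gb a b s k : (a <= s)%Z -> (s + 2 * Z.of_nat k - 2 <= b)%Z -> Gb a b (alt s k).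
Proof.
  revert a s; induction k as [|k IH]; intros a s H1 H2; simpl; auto.
  split; [lia|]. apply IH; lia.
Qed.

Lemma Gb_one a b x : (a <= x <= b)%Z -> Gb a b [x].
Proof. simpl. auto. Qed.

Lemma Gb_two a b x y : (a <= x)%Z -> (x + 2 <= y)%Z -> (y <= b)%Z -> Gb a b [x; y].
Proof. simpl. lia. Qed.

Lemma C_even n j l : (1 <= n)%nat -> is_phi_rep j l ->
  Gb (- 2 * Z.of_nat n + 2) (2 * Z.of_nat n - 2) l ->
  is_phi_rep (Luc (2 * n) + j) ([- 2 * Z.of_nat n]%Z ++ l ++ [2 * Z.of_nat n]%Z).
Proof.
  intros Hn [G V] Hb. split.
  - apply (Gb_gapped (- 2 * Z.of_nat n) (2 * Z.of_nat n)).
    apply Gb_app with (b := (- 2 * Z.of_nat n)%Z); try lia.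
    + apply Gb_one; lia.
    + apply Gb_app with (b := (2 * Z.of_nat n - 2)%Z); try lia.
      * eapply Gb_weak; eauto; lia.
      * apply Gb_one; lia.
  - rewrite !pv_app, V, plus_INR. rewrite ?pv_cons, ?pv_nil.
    rewrite (Luc_even_gen n (2 * n) (2 * Z.of_nat n) (- 2 * Z.of_nat n)) by lia.
    ring.
Qed.

Lemma C_alt n : is_phi_rep (Luc (2 * n + 1)) (alt (- 2 * Z.of_nat n) (2 * n + 1)).
Proof.
  split.
  - apply (Gb_gapped (- 2 * Z.of_nat n) (2 * Z.of_nat n)). apply alt_Gb; lia.
  - rewrite alt_value.
    rewrite (Luc_odd_gen n (2 * n + 1) (- 2 * Z.of_nat n + 2 * Z.of_nat (2 * n + 1) - 1)
               (- 2 * Z.of_nat n - 1)) by lia. ring.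
Qed.

Lemma C_O1a p j m :
  is_phi_rep (Luc (2 * p + 3) + j) ([- 2 * Z.of_nat p - 4]%Z ++ m ++ [2 * Z.of_nat p + 3]%Z) ->
  Gb (- 2 * Z.of_nat p - 1) (2 * Z.of_nat p + 1) m ->
  is_phi_rep (Luc (2 * p + 5) + j) ([- 2 * Z.of_nat p - 6; - 2 * Z.of_nat p - 3]%Z ++ m ++ [2 * Z.of_nat p + 5]%Z).
Proof.
  set (z := Z.of_nat p). intros [G V] Hb. split.
  - apply (Gb_gapped (- 2 * z - 6) (2 * z + 5)).
    apply Gb_app with (b := (- 2 * z - 3)%Z); try lia.
    + apply Gb_two; lia.
    + apply Gb_app with (b := (2 * z + 1)%Z); try lia.
      * eapply Gb_weak; eauto; lia.
      * apply Gb_one; lia.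
  - rewrite !pv_app in *. rewrite plus_INR in *. rewrite ?pv_cons, ?pv_nil in *.
    rewrite (Luc_odd_gen (p + 1) (2 * p + 3) (2 * z + 3) (- 2 * z - 3)) in V by lia.
    rewrite (Luc_odd_gen (p + 2) (2 * p + 5) (2 * z + 5) (- 2 * z - 5)) by lia.
    assert (pw (- 2 * z - 4) = pw (- 2 * z - 5) + pw (- 2 * z - 6)) by (apply pw_rec3; lia).
    assert (pw (2 * z + 5) = pw (2 * z + 4) + pw (2 * z + 3)) by (apply pw_rec3; lia).
    lra.
Qed.

Lemma C_O2 p i l :
  is_phi_rep i l -> Gb (- 2 * Z.of_nat p) (2 * Z.of_nat p) l ->
  is_phi_rep (Luc (2 * p + 5) + Luc (2 * p + 2) + i)
    ([- 2 * Z.of_nat p - 6]%Z ++ ([- 2 * Z.of_nat p - 3]%Z ++ l ++ [2 * Z.of_nat p + 2]%Z) ++ [2 * Z.of_nat p + 5]%Z)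
  /\ Gb (- 2 * Z.of_nat p - 3) (2 * Z.of_nat p + 3) ([- 2 * Z.of_nat p - 3]%Z ++ l ++ [2 * Z.of_nat p + 2]%Z).
Proof.
  set (z := Z.of_nat p). intros [G V] Hb.
  assert (Hm : Gb (- 2 * z - 3) (2 * z + 3) ([- 2 * z - 3]%Z ++ l ++ [2 * z + 2]%Z)).
  { apply Gb_app with (b := (- 2 * z - 3)%Z); try lia.
    + apply Gb_one; lia.
    + apply Gb_app with (b := (2 * z)%Z); try lia.
      * eapply Gb_weak; eauto; lia.
      * apply Gb_one; lia. }
  split; auto. split.
  - apply (Gb_gapped (- 2 * z - 6) (2 * z + 5)).
    apply Gb_app with (b := (- 2 * z - 6)%Z); try lia.
    + apply Gb_one; lia.
    + apply Gb_app with (b := (2 * z + 3)%Z); try lia; [eapply Gb_weak; eauto; lia | apply Gb_one; lia].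
  - rewrite !pv_app, V, !plus_INR. rewrite ?pv_cons, ?pv_nil.
    rewrite (Luc_odd_gen (p + 2) (2 * p + 5) (2 * z + 5) (- 2 * z - 5)) by lia.
    rewrite (Luc_even_gen (p + 1) (2 * p + 2) (2 * z + 2) (- 2 * z - 2)) by lia.
    assert (pw (- 2 * z - 4) = pw (- 2 * z - 5) + pw (- 2 * z - 6)) by (apply pw_rec3; lia).
    assert (pw (- 2 * z - 2) = pw (- 2 * z - 3) + pw (- 2 * z - 4)) by (apply pw_rec3; lia).
    lra.
Qed.

Lemma C_O1' p j m :
  is_phi_rep (Luc (2 * p + 3) + j) ([- 2 * Z.of_nat p - 4]%Z ++ m ++ [2 * Z.of_nat p + 3]%Z) ->
  Gb (- 2 * Z.of_nat p - 1) (2 * Z.of_nat p + 1) m ->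
  is_phi_rep (Luc (2 * p + 5) + j) ([- 2 * Z.of_nat p - 6]%Z ++ ([- 2 * Z.of_nat p - 3]%Z ++ m) ++ [2 * Z.of_nat p + 5]%Z)
  /\ Gb (- 2 * Z.of_nat p - 3) (2 * Z.of_nat p + 3) ([- 2 * Z.of_nat p - 3]%Z ++ m).
Proof.
  intros H Hb. pose proof (C_O1a p j m H Hb) as [G V].
  split; [split|].
  - simpl in G |- *. exact G.
  - rewrite <- V. rewrite !pv_app, !pv_cons, !pv_nil. ring.
  - apply Gb_app with (b := (- 2 * Z.of_nat p - 3)%Z); try lia.
    + apply Gb_one; lia.
    + eapply Gb_weak; eauto; lia.
Qed.

Lemma C_O4 p j m :
  is_phi_rep (Luc (2 * p + 3) + j) ([- 2 * Z.of_nat p - 4]%Z ++ m ++ [2 * Z.of_nat p + 3]%Z) ->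
  Gb (- 2 * Z.of_nat p - 1) (2 * Z.of_nat p + 1) m ->
  is_phi_rep (Luc (2 * p + 5) + Luc (2 * p + 3) + j)
    ([- 2 * Z.of_nat p - 6]%Z ++ (m ++ [2 * Z.of_nat p + 3]%Z) ++ [2 * Z.of_nat p + 5]%Z)
  /\ Gb (- 2 * Z.of_nat p - 3) (2 * Z.of_nat p + 3) (m ++ [2 * Z.of_nat p + 3]%Z).
Proof.
  set (z := Z.of_nat p). intros [G V] Hb.
  assert (Hm : Gb (- 2 * z - 3) (2 * z + 3) (m ++ [2 * z + 3]%Z)).
  { apply Gb_app with (b := (2 * z + 1)%Z); try lia.
    + eapply Gb_weak; eauto; lia.
    + apply Gb_one; lia. }
  split; auto. split.
  - apply (Gb_gapped (- 2 * z - 6) (2 * z + 5)).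
    apply Gb_app with (b := (- 2 * z - 6)%Z); try lia.
    + apply Gb_one; lia.
    + apply Gb_app with (b := (2 * z + 3)%Z); try lia; [eapply Gb_weak; eauto; lia | apply Gb_one; lia].
  - rewrite !pv_app in *. rewrite !plus_INR in *. rewrite ?pv_cons, ?pv_nil in *.
    rewrite (Luc_odd_gen (p + 2) (2 * p + 5) (2 * z + 5) (- 2 * z - 5)) by lia.
    assert (pw (- 2 * z - 4) = pw (- 2 * z - 5) + pw (- 2 * z - 6)) by (apply pw_rec3; lia).
    lra.
Qed.

Lemma pw_small : pw 0 = 1.
Proof. reflexivity. Qed.

Ltac pwchain :=
  pose proof pw_small;
  assert (pw 3 = pw 2 + pw 1) by (apply pw_rec3; lia);
  assert (pw 2 = pw 1 + pw 0) by (apply pw_rec3; lia);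
  assert (pw 1 = pw 0 + pw (-1)) by (apply pw_rec3; lia);
  assert (pw 0 = pw (-1) + pw (-2)) by (apply pw_rec3; lia);
  assert (pw (-1) = pw (-2) + pw (-3)) by (apply pw_rec3; lia);
  assert (pw (-2) = pw (-3) + pw (-4)) by (apply pw_rec3; lia).

Lemma rep2 : is_phi_rep 2 [-2; 1]%Z.
Proof. split. { simpl. lia. } rewrite !pv_cons, pv_nil. pwchain. assert (INR 2 = 2) by (simpl; lra). lra. Qed.
Lemma rep5 : is_phi_rep 5 [-4; -1; 3]%Z.
Proof. split. { simpl. lia. } rewrite !pv_cons, pv_nil. pwchain. assert (INR 5 = 5) by (simpl; lra). lra. Qed.
Lemma rep6 : is_phi_rep 6 [-4; 1; 3]%Z.
Proof. split. { simpl. lia. } rewrite !pv_cons, pv_nil. pwchain. assert (INR 6 = 6) by (simpl; lra). lra. Qed.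

Definition BND (N : nat) (l : list Z) : Prop :=
  forall k : nat, (N <= Luc (2 * k + 1))%nat -> Gb (- 2 * Z.of_nat k) (2 * Z.of_nat k) l.

Definition ODDs (N : nat) (l : list Z) : Prop :=
  forall n : nat, (Luc (2 * n + 1) < N < Luc (2 * n + 2))%nat ->
  exists m, l = [- 2 * Z.of_nat n - 2]%Z ++ m ++ [2 * Z.of_nat n + 1]%Z /\
            Gb (- 2 * Z.of_nat n + 1) (2 * Z.of_nat n - 1) m.

Lemma EVEN_form n N m : (1 <= n)%nat -> (Luc (2 * n) <= N < Luc (2 * n + 1))%nat ->
  Gb (- 2 * Z.of_nat n + 2) (2 * Z.of_nat n - 2) m ->
  BND N ([- 2 * Z.of_nat n]%Z ++ m ++ [2 * Z.of_nat n]%Z) /\ ODDs N ([- 2 * Z.of_nat n]%Z ++ m ++ [2 * Z.of_nat n]%Z).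
Proof.
  intros Hn HN Hm. split.
  - intros k Hk. assert (n <= k)%nat.
    { destruct (Nat.lt_ge_cases k n); auto. pose proof (Luc_lt (2 * k + 1) (2 * n) ltac:(lia) ltac:(lia)). lia. }
    apply Gb_app with (b := (- 2 * Z.of_nat n)%Z); try lia.
    + apply Gb_one; lia.
    + apply Gb_app with (b := (2 * Z.of_nat n - 2)%Z); try lia.
      * eapply Gb_weak; eauto; lia.
      * apply Gb_one; lia.
  - intros n' Hn'. exfalso. destruct (Nat.lt_ge_cases n' n).
    + pose proof (Luc_le (2 * n' + 2) (2 * n) ltac:(lia) ltac:(lia)). lia.
    + pose proof (Luc_le (2 * n + 1) (2 * n' + 1) ltac:(lia) ltac:(lia)). lia.
Qed.

Lemma ALT_form n : BND (Luc (2 * n + 1)) (alt (- 2 * Z.of_nat n) (2 * n + 1)) /\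
                   ODDs (Luc (2 * n + 1)) (alt (- 2 * Z.of_nat n) (2 * n + 1)).
Proof.
  split.
  - intros k Hk. assert (n <= k)%nat.
    { destruct (Nat.lt_ge_cases k n); auto. pose proof (Luc_lt (2 * k + 1) (2 * n + 1) ltac:(lia) ltac:(lia)). lia. }
    apply alt_Gb; lia.
  - intros n' Hn'. exfalso. destruct (lt_eq_lt_dec n' n) as [[H|H]|H].
    + pose proof (Luc_le (2 * n' + 2) (2 * n + 1) ltac:(lia) ltac:(lia)). lia.
    + subst. lia.
    + pose proof (Luc_le (2 * n + 1) (2 * n' + 1) ltac:(lia) ltac:(lia)). lia.
Qed.

Lemma ODD_form n N m : (Luc (2 * n + 1) < N < Luc (2 * n + 2))%nat ->
  Gb (- 2 * Z.of_nat n + 1) (2 * Z.of_nat n - 1) m ->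
  BND N ([- 2 * Z.of_nat n - 2]%Z ++ m ++ [2 * Z.of_nat n + 1]%Z) /\
  ODDs N ([- 2 * Z.of_nat n - 2]%Z ++ m ++ [2 * Z.of_nat n + 1]%Z).
Proof.
  intros HN Hm. split.
  - intros k Hk. assert (n + 1 <= k)%nat.
    { destruct (Nat.lt_ge_cases k (n + 1)); auto. pose proof (Luc_le (2 * k + 1) (2 * n + 1) ltac:(lia) ltac:(lia)). lia. }
    apply Gb_app with (b := (- 2 * Z.of_nat n - 2)%Z); try lia.
    + apply Gb_one; lia.
    + apply Gb_app with (b := (2 * Z.of_nat n - 1)%Z); try lia.
      * eapply Gb_weak; eauto; lia.
      * apply Gb_one; lia.
  - intros n' Hn'. destruct (lt_eq_lt_dec n' n) as [[H|H]|H].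
    + exfalso. pose proof (Luc_le (2 * n' + 2) (2 * n + 1) ltac:(lia) ltac:(lia)). lia.
    + subst. eauto.
    + exfalso. pose proof (Luc_le (2 * n + 2) (2 * n' + 1) ltac:(lia) ltac:(lia)). lia.
Qed.

Lemma Luc_vals : Luc 0 = 2%nat /\ Luc 1 = 1%nat /\ Luc 2 = 3%nat /\ Luc 3 = 4%nat /\ Luc 4 = 7%nat /\ Luc 5 = 11%nat.
Proof. repeat split; reflexivity. Qed.

Lemma list_eq3 (a a' : Z) m (b b' : Z) : a = a' -> b = b' -> [a] ++ m ++ [b] = [a'] ++ m ++ [b'].
Proof. intros -> ->. reflexivity. Qed.

Theorem main_rep N : exists l, is_phi_rep N l /\ BND N l /\ ODDs N l.
Proof.
  induction N as [N IH] using (well_founded_induction lt_wf).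
  destruct (Nat.eq_dec N 0) as [->|HN0].
  { exists []. split; [split; simpl; auto|]. split.
    - intros k _. simpl. auto.
    - intros n Hn. pose proof (Luc_pos (2 * n + 1)). lia. }
  destruct (block_exists N ltac:(lia)) as [k [Hk1 Hk2]].
  destruct (Nat.Even_or_Odd k) as [[n ->]|[n ->]].
  -
    destruct n as [|q]; [lia|].
    assert (EL : Luc (2 * S q + 1) = (Luc (2 * S q) + Luc (2 * q + 1))%nat).
    { replace (2 * S q + 1)%nat with (S (S (2 * q + 1))) by lia. rewrite Luc_SS.
      replace (S (2 * q + 1)) with (2 * S q)%nat by lia. reflexivity. }
    replace (S (2 * S q)) with (2 * S q + 1)%nat in Hk2 by lia.
    set (j := (N - Luc (2 * S q))%nat).
    assert (Hj : (j < N)%nat) by (pose proof (Luc_pos (2 * S q)); unfold j; lia).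
    destruct (IH j Hj) as [lj [Rj [Bj _]]].
    assert (Gj : Gb (- 2 * Z.of_nat q) (2 * Z.of_nat q) lj) by (apply Bj; unfold j; lia).
    assert (Gj' : Gb (- 2 * Z.of_nat (S q) + 2) (2 * Z.of_nat (S q) - 2) lj) by (eapply Gb_weak; eauto; lia).
    exists ([- 2 * Z.of_nat (S q)]%Z ++ lj ++ [2 * Z.of_nat (S q)]%Z).
    split.
    + replace N with (Luc (2 * S q) + j)%nat by (unfold j; lia). apply C_even; auto. lia.
    + apply EVEN_form; auto. lia.
  -
    replace (S (2 * n + 1)) with (2 * n + 2)%nat in Hk2 by lia.
    destruct (Nat.eq_dec N (Luc (2 * n + 1))) as [E|E].
    + exists (alt (- 2 * Z.of_nat n) (2 * n + 1)). rewrite E. split; [apply C_alt|apply ALT_form].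
    + assert (HB : (Luc (2 * n + 1) < N < Luc (2 * n + 2))%nat) by lia.
      destruct n as [|[|p]].
      *
        simpl in HB. assert (N = 2%nat) by lia. subst N.
        exists [-2; 1]%Z. split; [apply rep2|].
        apply (ODD_form 0 2 []); simpl; auto.
      * simpl in HB. assert (N = 5 \/ N = 6)%nat as [->| ->] by lia.
        -- exists [-4; -1; 3]%Z. split; [apply rep5|].
           apply (ODD_form 1 5 [-1]%Z); simpl; lia.
        -- exists [-4; 1; 3]%Z. split; [apply rep6|].
           apply (ODD_form 1 6 [1]%Z); simpl; lia.
      *
        assert (L5 : Luc (2 * S (S p) + 1) = Luc (2 * p + 5)) by (f_equal; lia).
        assert (L6 : Luc (2 * S (S p) + 2) = (Luc (2 * p + 5) + Luc (2 * p + 4))%nat).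
        { replace (2 * S (S p) + 2)%nat with (S (S (2 * p + 4))) by lia. rewrite Luc_SS. replace (S (2 * p + 4)) with (2 * p + 5)%nat by lia. reflexivity. }
        assert (L4 : Luc (2 * p + 4) = (Luc (2 * p + 3) + Luc (2 * p + 2))%nat).
        { replace (2 * p + 4)%nat with (S (S (2 * p + 2))) by lia. rewrite Luc_SS. replace (S (2 * p + 2)) with (2 * p + 3)%nat by lia. reflexivity. }
        assert (L3 : Luc (2 * p + 3) = (Luc (2 * p + 2) + Luc (2 * p + 1))%nat).
        { replace (2 * p + 3)%nat with (S (S (2 * p + 1))) by lia. rewrite Luc_SS. replace (S (2 * p + 1)) with (2 * p + 2)%nat by lia. reflexivity. }
        assert (L35 : (Luc (2 * p + 3) < Luc (2 * p + 5))%nat) by (apply Luc_lt; lia).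
        pose proof (Luc_pos (2 * p + 1)) as P1. pose proof (Luc_pos (2 * p + 2)) as P2.
        rewrite L5, L6 in HB.
        set (j := (N - Luc (2 * p + 5))%nat).
        set (z := Z.of_nat p).
        assert (Ez : Z.of_nat (S (S p)) = (z + 2)%Z) by (unfold z; lia).
        assert (Hform : forall m', Gb (- 2 * z - 3) (2 * z + 3) m' ->
                  BND N ([- 2 * z - 6]%Z ++ m' ++ [2 * z + 5]%Z) /\ ODDs N ([- 2 * z - 6]%Z ++ m' ++ [2 * z + 5]%Z)).
        { intros m' Hm'. rewrite (list_eq3 _ (- 2 * Z.of_nat (S (S p)) - 2)%Z _ _ (2 * Z.of_nat (S (S p)) + 1)%Z) by lia.
          apply ODD_form.
          - rewrite L5, L6. lia.
          - eapply Gb_weak; eauto; lia. }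
        destruct (Nat.lt_ge_cases j (Luc (2 * p + 2))) as [J1|J1];
          [|destruct (Nat.le_gt_cases j (Luc (2 * p + 3))) as [J2|J2]].
        --
           set (N' := (Luc (2 * p + 3) + j)%nat).
           destruct (IH N' ltac:(unfold N', j; lia)) as [l' [R' [_ O']]].
           destruct (O' (S p)) as [m [Hl' Hm]].
           { replace (2 * S p + 1)%nat with (2 * p + 3)%nat by lia.
             replace (2 * S p + 2)%nat with (2 * p + 4)%nat by lia. unfold N', j. lia. }
           rewrite Hl' in R'.
           rewrite (list_eq3 _ (- 2 * z - 4)%Z _ _ (2 * z + 3)%Z) in R' by (unfold z; lia).
           assert (Hm2 : Gb (- 2 * z - 1) (2 * z + 1) m) by (eapply Gb_weak; eauto; unfold z; lia).
           destruct (C_O1' p j m R' Hm2) as [R Hm'].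
           eexists. split; [|apply Hform; exact Hm'].
           replace N with (Luc (2 * p + 5) + j)%nat by (unfold j; lia). exact R.
        --
           set (i := (j - Luc (2 * p + 2))%nat).
           destruct (IH i ltac:(unfold i, j; lia)) as [li [Ri [Bi _]]].
           assert (Gi : Gb (- 2 * z) (2 * z) li) by (apply Bi; unfold i; lia).
           destruct (C_O2 p i li Ri Gi) as [R Hm'].
           eexists. split; [|apply Hform; exact Hm'].
           replace N with (Luc (2 * p + 5) + Luc (2 * p + 2) + i)%nat by (unfold i, j; lia). exact R.
        --
           set (j' := (j - Luc (2 * p + 3))%nat).
           set (N' := (Luc (2 * p + 3) + j')%nat).
           destruct (IH N' ltac:(unfold N', j', j; lia)) as [l' [R' [_ O']]].
           destruct (O' (S p)) as [m [Hl' Hm]].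
           { replace (2 * S p + 1)%nat with (2 * p + 3)%nat by lia.
             replace (2 * S p + 2)%nat with (2 * p + 4)%nat by lia. unfold N', j', j. lia. }
           rewrite Hl' in R'.
           rewrite (list_eq3 _ (- 2 * z - 4)%Z _ _ (2 * z + 3)%Z) in R' by (unfold z; lia).
           assert (Hm2 : Gb (- 2 * z - 1) (2 * z + 1) m) by (eapply Gb_weak; eauto; unfold z; lia).
           destruct (C_O4 p j' m R' Hm2) as [R Hm'].
           eexists. split; [|apply Hform; exact Hm'].
           replace N with (Luc (2 * p + 5) + Luc (2 * p + 3) + j')%nat by (unfold j', j; lia). exact R.
Qed.

Local Close Scope R_scope.
Local Open Scope nat_scope.

Notation s := s_beta.

Lemma Luc_SS' k : Luc (k + 2) = Luc (k + 1) + Luc k.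
Proof. replace (k + 2) with (S (S k)) by lia. rewrite Luc_SS. f_equal. f_equal. lia. Qed.

Lemma Luc3 a b c : b = a + 1 -> c = a + 2 -> Luc c = Luc b + Luc a.
Proof. intros -> ->. apply Luc_SS'. Qed.

Lemma sE q j : j < Luc (2 * q + 1) -> s (Luc (2 * q + 2) + j) = 2 + s j.
Proof.
  intros Hj. destruct (main_rep j) as [l [R [B _]]].
  assert (G : Gb (- 2 * Z.of_nat q) (2 * Z.of_nat q) l) by (apply B; lia).
  pose proof (C_even (S q) j l ltac:(lia) R ltac:(eapply Gb_weak; eauto; lia)) as R'.
  replace (2 * S q) with (2 * q + 2) in R' by lia.
  rewrite (s_beta_eq _ _ R'), (s_beta_eq _ _ R). rewrite !length_app. simpl. lia.
Qed.

Lemma sA n : s (Luc (2 * n + 1)) = 2 * n + 1.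
Proof. rewrite (s_beta_eq _ _ (C_alt n)). apply alt_len. Qed.

Lemma odd_shape p j : 1 <= j < Luc (2 * p + 2) ->
  exists m, is_phi_rep (Luc (2 * p + 3) + j) ([- 2 * Z.of_nat p - 4]%Z ++ m ++ [2 * Z.of_nat p + 3]%Z)
    /\ Gb (- 2 * Z.of_nat p - 1) (2 * Z.of_nat p + 1) m.
Proof.
  intros Hj. destruct (main_rep (Luc (2 * p + 3) + j)) as [l [R [_ O]]].
  destruct (O (S p)) as [m [Hl Hm]].
  { replace (2 * S p + 1) with (2 * p + 3) by lia. replace (2 * S p + 2) with (2 * p + 4) by lia.
    rewrite (Luc3 (2 * p + 2) (2 * p + 3) (2 * p + 4)) by lia. lia. }
  exists m. split.
  - rewrite Hl in R. rewrite (list_eq3 _ (- 2 * Z.of_nat p - 4)%Z _ _ (2 * Z.of_nat p + 3)%Z) in R by lia. exact R.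
  - eapply Gb_weak; eauto; lia.
Qed.

Lemma sO1 p j : 1 <= j < Luc (2 * p + 2) -> s (Luc (2 * p + 5) + j) = 1 + s (Luc (2 * p + 3) + j).
Proof.
  intros Hj. destruct (odd_shape p j Hj) as [m [R Hm]].
  destruct (C_O1' p j m R Hm) as [R' _].
  rewrite (s_beta_eq _ _ R'), (s_beta_eq _ _ R). rewrite !length_app. simpl. lia.
Qed.

Lemma sO4 p j : 1 <= j < Luc (2 * p + 2) -> s (Luc (2 * p + 5) + Luc (2 * p + 3) + j) = 1 + s (Luc (2 * p + 3) + j).
Proof.
  intros Hj. destruct (odd_shape p j Hj) as [m [R Hm]].
  destruct (C_O4 p j m R Hm) as [R' _].
  rewrite (s_beta_eq _ _ R'), (s_beta_eq _ _ R). rewrite !length_app. simpl. lia.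
Qed.

Lemma sO2 p i : i <= Luc (2 * p + 1) -> s (Luc (2 * p + 5) + Luc (2 * p + 2) + i) = 4 + s i.
Proof.
  intros Hi. destruct (main_rep i) as [l [R [B _]]].
  destruct (C_O2 p i l R (B p Hi)) as [R' _].
  rewrite (s_beta_eq _ _ R'), (s_beta_eq _ _ R). rewrite !length_app. simpl. lia.
Qed.

Lemma s0 : s 0 = 0.
Proof. apply (s_beta_eq 0 []). split; simpl; auto. Qed.
Lemma s2 : s 2 = 2.
Proof. rewrite (s_beta_eq _ _ rep2). reflexivity. Qed.
Lemma s5 : s 5 = 3.
Proof. rewrite (s_beta_eq _ _ rep5). reflexivity. Qed.
Lemma s6 : s 6 = 3.
Proof. rewrite (s_beta_eq _ _ rep6). reflexivity. Qed.

Lemma Luc_ge2 k : 1 <= k -> 3 <= Luc (k + 1).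
Proof. intros H. pose proof (Luc_le 2 (k + 1) ltac:(lia) ltac:(lia)). simpl in H0. lia. Qed.

Lemma sLo m : s (Luc (2 * m + 1) - 1) = 2 * m.
Proof.
  induction m as [|m IH].
  - simpl. apply s0.
  - replace (2 * S m + 1) with (2 * m + 1 + 2) by lia. rewrite Luc_SS'.
    replace (2 * m + 1 + 1) with (2 * m + 2) by lia.
    pose proof (Luc_pos (2 * m + 1)).
    replace (Luc (2 * m + 2) + Luc (2 * m + 1) - 1) with (Luc (2 * m + 2) + (Luc (2 * m + 1) - 1)) by lia.
    rewrite sE by lia. rewrite IH. lia.
Qed.

Lemma sLe m : s (Luc (2 * m + 2) - 1) = m + 2.
Proof.
  induction m as [m IH] using (well_founded_induction lt_wf).
  destruct m as [|[|p]].
  - simpl. apply s2.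
  - simpl. apply s6.
  - assert (E4 : Luc (2 * S p + 2) = Luc (2 * p + 3) + Luc (2 * p + 2)) by (apply Luc3; lia).
    assert (E6 : Luc (2 * S (S p) + 2) = Luc (2 * p + 5) + Luc (2 * p + 3) + Luc (2 * p + 2)).
    { rewrite (Luc3 (2 * p + 4) (2 * p + 5) (2 * S (S p) + 2)) by lia.
      rewrite (Luc3 (2 * p + 2) (2 * p + 3) (2 * p + 4)) by lia. lia. }
    pose proof (Luc_ge2 (2 * p + 1) ltac:(lia)). replace (2 * p + 1 + 1) with (2 * p + 2) in H by lia.
    rewrite E6.
    replace (Luc (2 * p + 5) + Luc (2 * p + 3) + Luc (2 * p + 2) - 1)
      with (Luc (2 * p + 5) + Luc (2 * p + 3) + (Luc (2 * p + 2) - 1)) by lia.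
    rewrite sO4 by lia.
    specialize (IH (S p) ltac:(lia)). rewrite E4 in IH.
    replace (Luc (2 * p + 3) + (Luc (2 * p + 2) - 1)) with (Luc (2 * p + 3) + Luc (2 * p + 2) - 1) by lia.
    rewrite IH. lia.
Qed.

Lemma sLp m : 1 <= m -> s (Luc (2 * m + 1) + 1) = m + 2.
Proof.
  intros Hm. induction m as [m IH] using (well_founded_induction lt_wf).
  destruct m as [|[|p]]; [lia| |].
  - simpl. apply s5.
  - replace (2 * S (S p) + 1) with (2 * p + 5) by lia.
    pose proof (Luc_ge2 (2 * p + 1) ltac:(lia)). replace (2 * p + 1 + 1) with (2 * p + 2) in H by lia.
    rewrite sO1 by lia. specialize (IH (S p) ltac:(lia) ltac:(lia)).
    replace (2 * S p + 1) with (2 * p + 3) in IH by lia. rewrite IH. lia.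
Qed.

Local Close Scope R_scope.
Local Open Scope nat_scope.

Inductive sgn := Pl | Ze | Mi.

Definition sgc (a b : nat) : sgn :=
  if Nat.ltb a b then Pl else if Nat.eqb b a then Ze else Mi.

Definition sg (N : nat) : sgn := sgc (s N) (s (S N)).

Lemma sgc_shift c a b : sgc (c + a) (c + b) = sgc a b.
Proof.
  unfold sgc. destruct (Nat.ltb_spec a b), (Nat.ltb_spec (c + a) (c + b)); try lia;
  destruct (Nat.eqb_spec b a), (Nat.eqb_spec (c + b) (c + a)); try lia; auto.
Qed.

Lemma sgc_lt a b : a < b -> sgc a b = Pl.
Proof. intros H. unfold sgc. destruct (Nat.ltb_spec a b); auto; lia. Qed.
Lemma sgc_gt a b : b < a -> sgc a b = Mi.
Proof. intros H. unfold sgc. destruct (Nat.ltb_spec a b); try lia. destruct (Nat.eqb_spec b a); auto; lia. Qed.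

Lemma sg_eq_shift c a b : s a = c + s b -> s (S a) = c + s (S b) -> sg a = sg b.
Proof. intros H1 H2. unfold sg. rewrite H1, H2. apply sgc_shift. Qed.

Lemma sgE q j : j + 1 < Luc (2 * q + 1) -> sg (Luc (2 * q + 2) + j) = sg j.
Proof.
  intros H. apply (sg_eq_shift 2).
  - apply sE. lia.
  - replace (S (Luc (2 * q + 2) + j)) with (Luc (2 * q + 2) + S j) by lia. apply sE. lia.
Qed.

Lemma sE0 q : s (Luc (2 * q + 2)) = 2.
Proof. replace (Luc (2 * q + 2)) with (Luc (2 * q + 2) + 0) by lia. rewrite sE by (pose proof (Luc_pos (2*q+1)); lia). rewrite s0. reflexivity. Qed.

Lemma S1 q : 1 <= q -> sg (Luc (2 * q + 2) - 1) = Mi.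
Proof.
  intros Hq. unfold sg. pose proof (Luc_pos (2 * q + 2)).
  replace (S (Luc (2 * q + 2) - 1)) with (Luc (2 * q + 2)) by lia.
  rewrite sE0, sLe. apply sgc_gt. lia.
Qed.

Lemma S2 n : sg (Luc (2 * n + 1) - 1) = Pl.
Proof.
  unfold sg. pose proof (Luc_pos (2 * n + 1)).
  replace (S (Luc (2 * n + 1) - 1)) with (Luc (2 * n + 1)) by lia.
  rewrite sLo, sA. apply sgc_lt. lia.
Qed.

Lemma S3 n : 2 <= n -> sg (Luc (2 * n + 1)) = Mi.
Proof.
  intros Hn. unfold sg. replace (S (Luc (2 * n + 1))) with (Luc (2 * n + 1) + 1) by lia.
  rewrite sA, sLp by lia. apply sgc_gt. lia.
Qed.

Lemma Ev1 q i : 1 <= q -> i < Luc (2 * q + 1) -> sg (Luc (2 * q + 4) - 1 + i) = sg (Luc (2 * q + 2) - 1 + i).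
Proof.
  intros Hq Hi. destruct i as [|i'].
  - rewrite !Nat.add_0_r. replace (2 * q + 4) with (2 * (q + 1) + 2) by lia. rewrite !S1 by lia. reflexivity.
  - pose proof (Luc_pos (2 * q + 4)). pose proof (Luc_pos (2 * q + 2)).
    replace (Luc (2 * q + 4) - 1 + S i') with (Luc (2 * (q + 1) + 2) + i')
      by (replace (2 * (q + 1) + 2) with (2 * q + 4) by lia; lia).
    replace (Luc (2 * q + 2) - 1 + S i') with (Luc (2 * q + 2) + i') by lia.
    pose proof (Luc_lt (2 * q + 1) (2 * (q + 1) + 1) ltac:(lia) ltac:(lia)).
    rewrite !sgE by lia. reflexivity.
Qed.

Lemma Ev2 q i : 1 <= q -> i < Luc (2 * q) ->
  sg (Luc (2 * q + 4) - 1 + Luc (2 * q + 1) + i) = sg (Luc (2 * q + 1) - 1 + i).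
Proof.
  intros Hq Hi. pose proof (Luc_pos (2 * q + 4)). pose proof (Luc_pos (2 * q + 1)).
  replace (Luc (2 * q + 4) - 1 + Luc (2 * q + 1) + i) with (Luc (2 * (q + 1) + 2) + (Luc (2 * q + 1) - 1 + i))
    by (replace (2 * (q + 1) + 2) with (2 * q + 4) by lia; lia).
  rewrite sgE; auto.
  rewrite (Luc3 (2 * q + 1) (2 * q + 2) (2 * (q + 1) + 1)) by lia.
  pose proof (Luc_lt (2 * q) (2 * q + 2) ltac:(lia) ltac:(lia)). lia.
Qed.

Lemma Ev3 q i : 1 <= q -> i < Luc (2 * q + 1) ->
  sg (Luc (2 * q + 4) - 1 + Luc (2 * q + 2) + i) = sg (Luc (2 * q + 2) - 1 + i).
Proof.
  intros Hq Hi. pose proof (Luc_pos (2 * q + 4)). pose proof (Luc_pos (2 * q + 2)).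
  replace (Luc (2 * q + 4) - 1 + Luc (2 * q + 2) + i) with (Luc (2 * (q + 1) + 2) + (Luc (2 * q + 2) - 1 + i))
    by (replace (2 * (q + 1) + 2) with (2 * q + 4) by lia; lia).
  rewrite sgE; auto.
  rewrite (Luc3 (2 * q + 1) (2 * q + 2) (2 * (q + 1) + 1)) by lia. lia.
Qed.

Lemma L5 r : Luc (2 * (r + 2) + 1) = Luc (2 * r + 5). Proof. f_equal; lia. Qed.
Lemma L3' r : Luc (2 * (r + 1) + 1) = Luc (2 * r + 3). Proof. f_equal; lia. Qed.

Lemma Od1 r i : 1 <= r -> i < Luc (2 * r + 2) -> sg (Luc (2 * r + 5) - 1 + i) = sg (Luc (2 * r + 3) - 1 + i).
Proof.
  intros Hr Hi. pose proof (Luc_pos (2 * r + 5)). pose proof (Luc_pos (2 * r + 3)).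
  destruct i as [|[|j]].
  - rewrite !Nat.add_0_r. rewrite <- L5, <- L3', !S2. reflexivity.
  - replace (Luc (2 * r + 5) - 1 + 1) with (Luc (2 * (r + 2) + 1)) by (rewrite L5; lia).
    replace (Luc (2 * r + 3) - 1 + 1) with (Luc (2 * (r + 1) + 1)) by (rewrite L3'; lia).
    rewrite !S3 by lia. reflexivity.
  - replace (Luc (2 * r + 5) - 1 + S (S j)) with (Luc (2 * r + 5) + S j) by lia.
    replace (Luc (2 * r + 3) - 1 + S (S j)) with (Luc (2 * r + 3) + S j) by lia.
    apply (sg_eq_shift 1).
    + apply sO1. lia.
    + replace (S (Luc (2 * r + 5) + S j)) with (Luc (2 * r + 5) + S (S j)) by lia.
      replace (S (Luc (2 * r + 3) + S j)) with (Luc (2 * r + 3) + S (S j)) by lia.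
      apply sO1. lia.
Qed.

Lemma Od2 r i : 1 <= r -> i < Luc (2 * r + 1) ->
  sg (Luc (2 * r + 5) - 1 + Luc (2 * r + 2) + i) = sg (Luc (2 * r + 2) - 1 + i).
Proof.
  intros Hr Hi. pose proof (Luc_pos (2 * r + 5)). pose proof (Luc_pos (2 * r + 2)).
  pose proof (Luc_ge2 (2 * r + 1) ltac:(lia)) as G2. replace (2 * r + 1 + 1) with (2 * r + 2) in G2 by lia.
  destruct i as [|i'].
  - rewrite !Nat.add_0_r. rewrite S1 by lia. unfold sg.
    replace (S (Luc (2 * r + 5) - 1 + Luc (2 * r + 2))) with (Luc (2 * r + 5) + Luc (2 * r + 2) + 0) by lia.
    replace (Luc (2 * r + 5) - 1 + Luc (2 * r + 2)) with (Luc (2 * r + 5) + (Luc (2 * r + 2) - 1)) by lia.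
    rewrite sO1 by lia. rewrite sO2 by lia. rewrite s0.
    replace (Luc (2 * r + 3) + (Luc (2 * r + 2) - 1)) with (Luc (2 * (r + 1) + 2) - 1)
      by (rewrite (Luc3 (2 * r + 2) (2 * r + 3) (2 * (r + 1) + 2)) by lia; lia).
    rewrite sLe. apply sgc_gt. lia.
  - replace (Luc (2 * r + 5) - 1 + Luc (2 * r + 2) + S i') with (Luc (2 * r + 5) + Luc (2 * r + 2) + i') by lia.
    replace (Luc (2 * r + 2) - 1 + S i') with (Luc (2 * r + 2) + i') by lia.
    rewrite sgE by lia.
    apply (sg_eq_shift 4).
    + apply sO2. lia.
    + replace (S (Luc (2 * r + 5) + Luc (2 * r + 2) + i')) with (Luc (2 * r + 5) + Luc (2 * r + 2) + S i') by lia.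
      apply sO2. lia.
Qed.

Lemma Od3 r i : 1 <= r -> i < Luc (2 * r + 2) ->
  sg (Luc (2 * r + 5) - 1 + Luc (2 * r + 3) + i) = sg (Luc (2 * r + 3) - 1 + i).
Proof.
  intros Hr Hi. pose proof (Luc_pos (2 * r + 5)). pose proof (Luc_pos (2 * r + 3)). pose proof (Luc_pos (2 * r + 1)).
  assert (E3 : Luc (2 * r + 3) = Luc (2 * r + 2) + Luc (2 * r + 1)) by (apply Luc3; lia).
  destruct i as [|[|j]].
  - rewrite !Nat.add_0_r. replace (sg (Luc (2 * r + 3) - 1)) with Pl by (rewrite <- L3'; symmetry; apply S2). unfold sg.
    replace (S (Luc (2 * r + 5) - 1 + Luc (2 * r + 3))) with (Luc (2 * r + 5) + Luc (2 * r + 2) + Luc (2 * r + 1)) by lia.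
    replace (Luc (2 * r + 5) - 1 + Luc (2 * r + 3)) with (Luc (2 * r + 5) + Luc (2 * r + 2) + (Luc (2 * r + 1) - 1)) by lia.
    rewrite !sO2 by lia. rewrite sA, sLo. apply sgc_lt. lia.
  - replace (Luc (2 * r + 5) - 1 + Luc (2 * r + 3) + 1) with (Luc (2 * r + 5) + Luc (2 * r + 3)) by lia.
    replace (Luc (2 * r + 3) - 1 + 1) with (Luc (2 * (r + 1) + 1)) by (rewrite L3'; lia).
    rewrite S3 by lia. unfold sg.
    pose proof (Luc_ge2 (2 * r + 1) ltac:(lia)) as G2. replace (2 * r + 1 + 1) with (2 * r + 2) in G2 by lia.
    assert (HA : s (Luc (2 * r + 5) + Luc (2 * r + 3)) = 2 * r + 5).
    { rewrite E3. rewrite Nat.add_assoc. rewrite sO2 by lia. rewrite sA. lia. }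
    assert (HB : s (Luc (2 * r + 5) + Luc (2 * r + 3) + 1) = r + 4).
    { rewrite sO4 by lia. replace (Luc (2 * r + 3) + 1) with (Luc (2 * (r + 1) + 1) + 1) by (rewrite L3'; lia).
      rewrite sLp by lia. lia. }
    replace (S (Luc (2 * r + 5) + Luc (2 * r + 3))) with (Luc (2 * r + 5) + Luc (2 * r + 3) + 1) by lia.
    rewrite HA, HB. apply sgc_gt. lia.
  - replace (Luc (2 * r + 5) - 1 + Luc (2 * r + 3) + S (S j)) with (Luc (2 * r + 5) + Luc (2 * r + 3) + S j) by lia.
    replace (Luc (2 * r + 3) - 1 + S (S j)) with (Luc (2 * r + 3) + S j) by lia.
    apply (sg_eq_shift 1).
    + apply sO4. lia.
    + replace (S (Luc (2 * r + 5) + Luc (2 * r + 3) + S j)) with (Luc (2 * r + 5) + Luc (2 * r + 3) + S (S j)) by lia.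
      replace (S (Luc (2 * r + 3) + S j)) with (Luc (2 * r + 3) + S (S j)) by lia.
      apply sO4. lia.
Qed.

Local Close Scope R_scope.
Local Open Scope nat_scope.

Definition stab : list nat := [0;1;2;2;3;3;3;2;3;4;4;5;4;4;4;5;4;4;2;3;4;4;5;5;5;4;5;6;6;7].

Lemma s_tab N : N <= 29 -> s N = nth N stab 0.
Proof.
  intros HN.
  assert (H0 : s 0 = 0) by (apply s0).
  assert (H1 : s 1 = 1) by (change (s 1) with (s (Luc (2*0+1))); rewrite sA; reflexivity).
  assert (H2 : s 2 = 2) by (apply s2).
  assert (H3 : s 3 = 2) by (change (s 3) with (s (Luc (2*0+2) + 0)); rewrite sE by (simpl; lia); rewrite H0; reflexivity).
  assert (H4 : s 4 = 3) by (change (s 4) with (s (Luc (2*1+1))); rewrite sA; reflexivity).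
  assert (H5 : s 5 = 3) by (apply s5).
  assert (H6 : s 6 = 3) by (apply s6).
  assert (H7 : s 7 = 2) by (change (s 7) with (s (Luc (2*1+2) + 0)); rewrite sE by (simpl; lia); rewrite H0; reflexivity).
  assert (H8 : s 8 = 3) by (change (s 8) with (s (Luc (2*1+2) + 1)); rewrite sE by (simpl; lia); rewrite H1; reflexivity).
  assert (H9 : s 9 = 4) by (change (s 9) with (s (Luc (2*1+2) + 2)); rewrite sE by (simpl; lia); rewrite H2; reflexivity).
  assert (H10 : s 10 = 4) by (change (s 10) with (s (Luc (2*1+2) + 3)); rewrite sE by (simpl; lia); rewrite H3; reflexivity).
  assert (H11 : s 11 = 5) by (change (s 11) with (s (Luc (2*2+1))); rewrite sA; reflexivity).
  assert (H12 : s 12 = 4) by (change (s 12) with (s (Luc (2*0+5) + 1)); rewrite sO1 by (simpl; lia); change (Luc (2*0+3) + 1) with 5; rewrite H5; reflexivity).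
  assert (H13 : s 13 = 4) by (change (s 13) with (s (Luc (2*0+5) + 2)); rewrite sO1 by (simpl; lia); change (Luc (2*0+3) + 2) with 6; rewrite H6; reflexivity).
  assert (H14 : s 14 = 4) by (change (s 14) with (s (Luc (2*0+5) + Luc (2*0+2) + 0)); rewrite sO2 by (simpl; lia); rewrite H0; reflexivity).
  assert (H15 : s 15 = 5) by (change (s 15) with (s (Luc (2*0+5) + Luc (2*0+2) + 1)); rewrite sO2 by (simpl; lia); rewrite H1; reflexivity).
  assert (H16 : s 16 = 4) by (change (s 16) with (s (Luc (2*0+5) + Luc (2*0+3) + 1)); rewrite sO4 by (simpl; lia); change (Luc (2*0+3) + 1) with 5; rewrite H5; reflexivity).
  assert (H17 : s 17 = 4) by (change (s 17) with (s (Luc (2*0+5) + Luc (2*0+3) + 2)); rewrite sO4 by (simpl; lia); change (Luc (2*0+3) + 2) with 6; rewrite H6; reflexivity).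
  assert (H18 : s 18 = 2) by (change (s 18) with (s (Luc (2*2+2) + 0)); rewrite sE by (simpl; lia); rewrite H0; reflexivity).
  assert (H19 : s 19 = 3) by (change (s 19) with (s (Luc (2*2+2) + 1)); rewrite sE by (simpl; lia); rewrite H1; reflexivity).
  assert (H20 : s 20 = 4) by (change (s 20) with (s (Luc (2*2+2) + 2)); rewrite sE by (simpl; lia); rewrite H2; reflexivity).
  assert (H21 : s 21 = 4) by (change (s 21) with (s (Luc (2*2+2) + 3)); rewrite sE by (simpl; lia); rewrite H3; reflexivity).
  assert (H22 : s 22 = 5) by (change (s 22) with (s (Luc (2*2+2) + 4)); rewrite sE by (simpl; lia); rewrite H4; reflexivity).
  assert (H23 : s 23 = 5) by (change (s 23) with (s (Luc (2*2+2) + 5)); rewrite sE by (simpl; lia); rewrite H5; reflexivity).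
  assert (H24 : s 24 = 5) by (change (s 24) with (s (Luc (2*2+2) + 6)); rewrite sE by (simpl; lia); rewrite H6; reflexivity).
  assert (H25 : s 25 = 4) by (change (s 25) with (s (Luc (2*2+2) + 7)); rewrite sE by (simpl; lia); rewrite H7; reflexivity).
  assert (H26 : s 26 = 5) by (change (s 26) with (s (Luc (2*2+2) + 8)); rewrite sE by (simpl; lia); rewrite H8; reflexivity).
  assert (H27 : s 27 = 6) by (change (s 27) with (s (Luc (2*2+2) + 9)); rewrite sE by (simpl; lia); rewrite H9; reflexivity).
  assert (H28 : s 28 = 6) by (change (s 28) with (s (Luc (2*2+2) + 10)); rewrite sE by (simpl; lia); rewrite H10; reflexivity).
  assert (H29 : s 29 = 7) by (change (s 29) with (s (Luc (2*3+1))); rewrite sA; reflexivity).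
  do 30 (destruct N as [|N]; [simpl; assumption|]). lia.
Qed.

Definition sgtab : list sgn :=
  [Pl;Pl;Ze;Pl;Ze;Ze;Mi;Pl;Pl;Ze;Pl;Mi;Ze;Ze;Pl;Mi;Ze;Mi;Pl;Pl;Ze;Pl;Ze;Ze;Mi;Pl;Pl;Ze].

Lemma sg_tab N : N < 28 -> sg N = nth N sgtab Pl.
Proof.
  intros HN. unfold sg. rewrite (s_tab N) by lia. rewrite (s_tab (S N)) by lia.
  do 28 (destruct N as [|N]; [reflexivity|]). lia.
Qed.

Lemma LucE a b : a = b -> Luc a = Luc b.
Proof. intros ->; reflexivity. Qed.

Lemma BR1 k i : i < Luc (k + 4) -> sg (Luc (k + 7) - 1 + i) = sg (Luc (k + 5) - 1 + i).
Proof.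
  intros Hi. destruct (Nat.Even_or_Odd k) as [[q ->]|[q ->]].
  - rewrite (LucE (2 * q + 7) (2 * (q + 1) + 5)), (LucE (2 * q + 5) (2 * (q + 1) + 3)) by lia.
    apply Od1; [lia|]. rewrite <- (LucE (2 * q + 4)) by lia. exact Hi.
  - rewrite (LucE (2 * q + 1 + 7) (2 * (q + 2) + 4)), (LucE (2 * q + 1 + 5) (2 * (q + 2) + 2)) by lia.
    apply Ev1; [lia|]. rewrite <- (LucE (2 * q + 1 + 4)) by lia. exact Hi.
Qed.

Lemma BR2 k i : i < Luc (k + 3) -> sg (Luc (k + 7) - 1 + Luc (k + 4) + i) = sg (Luc (k + 4) - 1 + i).
Proof.
  intros Hi. destruct (Nat.Even_or_Odd k) as [[q ->]|[q ->]].
  - rewrite (LucE (2 * q + 7) (2 * (q + 1) + 5)), (LucE (2 * q + 4) (2 * (q + 1) + 2)) by lia.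
    apply Od2; [lia|]. rewrite <- (LucE (2 * q + 3)) by lia. exact Hi.
  - rewrite (LucE (2 * q + 1 + 7) (2 * (q + 2) + 4)), (LucE (2 * q + 1 + 4) (2 * (q + 2) + 1)) by lia.
    apply Ev2; [lia|]. rewrite <- (LucE (2 * q + 1 + 3)) by lia. exact Hi.
Qed.

Lemma BR3 k i : i < Luc (k + 4) -> sg (Luc (k + 7) - 1 + Luc (k + 5) + i) = sg (Luc (k + 5) - 1 + i).
Proof.
  intros Hi. destruct (Nat.Even_or_Odd k) as [[q ->]|[q ->]].
  - rewrite (LucE (2 * q + 7) (2 * (q + 1) + 5)), (LucE (2 * q + 5) (2 * (q + 1) + 3)) by lia.
    apply Od3; [lia|]. rewrite <- (LucE (2 * q + 4)) by lia. exact Hi.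
  - rewrite (LucE (2 * q + 1 + 7) (2 * (q + 2) + 4)), (LucE (2 * q + 1 + 5) (2 * (q + 2) + 2)) by lia.
    apply Ev3; [lia|]. rewrite <- (LucE (2 * q + 1 + 4)) by lia. exact Hi.
Qed.

Inductive blk := ba | bb | bc.

Definition theta (x : blk) : list blk :=
  match x with ba => [bb] | bb => [bc] | bc => [bb; ba; bb] end.

Definition thw (w : list blk) : list blk := flat_map theta w.

Fixpoint th (n : nat) : list blk :=
  match n with O => [ba] | S m => thw (th m) end.

Definition code (x : blk) : list sgn :=
  match x with
  | ba => [Mi;Pl;Pl;Ze]
  | bb => [Pl;Mi;Ze;Ze;Pl;Mi;Ze]
  | bc => [Mi;Pl;Pl;Ze;Pl;Ze;Ze;Mi;Pl;Pl;Ze]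
  end.

Definition Wd (n : nat) : list sgn := flat_map code (th n).

Lemma thw_app u v : thw (u ++ v) = thw u ++ thw v.
Proof. unfold thw. apply flat_map_app. Qed.

Lemma th_rec n : th (n + 3) = th (n + 1) ++ th n ++ th (n + 1).
Proof.
  induction n as [|n IH].
  - reflexivity.
  - replace (S n + 3) with (S (n + 3)) by lia. simpl th. rewrite IH, !thw_app.
    replace (S n + 1) with (S (n + 1)) by lia. reflexivity.
Qed.

Lemma Wd_rec n : Wd (n + 3) = Wd (n + 1) ++ Wd n ++ Wd (n + 1).
Proof. unfold Wd. rewrite th_rec, !flat_map_app. reflexivity. Qed.

Lemma Wd_len n : length (Wd n) = Luc (n + 3).
Proof.
  induction n as [n IH] using (well_founded_induction lt_wf).
  destruct n as [|[|[|n]]]; try reflexivity.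
  replace (S (S (S n))) with (n + 3) by lia. rewrite Wd_rec, !length_app.
  rewrite !IH by lia. rewrite (Luc3 (n + 4) (n + 5) (n + 3 + 3)) by lia.
  rewrite (Luc3 (n + 3) (n + 4) (n + 5)) by lia. replace (n + 1 + 3) with (n + 4) by lia. lia.
Qed.

Lemma Bthm n : forall i, i < Luc (n + 3) -> sg (Luc (n + 4) - 1 + i) = nth i (Wd n) Pl.
Proof.
  induction n as [n IH] using (well_founded_induction lt_wf).
  destruct n as [|[|[|k]]]; intros i Hi.
  - simpl in Hi |- *. rewrite sg_tab by lia. do 4 (destruct i as [|i]; [reflexivity|]). lia.
  - simpl in Hi |- *. rewrite sg_tab by lia. do 7 (destruct i as [|i]; [reflexivity|]). lia.
  - simpl in Hi |- *. rewrite sg_tab by lia. do 11 (destruct i as [|i]; [reflexivity|]). lia.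
  - replace (S (S (S k))) with (k + 3) in * by lia. rewrite Wd_rec.
    replace (k + 3 + 4) with (k + 7) by lia.
    replace (k + 3 + 3) with (k + 6) in Hi by lia.
    assert (E6 : Luc (k + 6) = Luc (k + 5) + Luc (k + 4)) by (apply Luc3; lia).
    assert (E5 : Luc (k + 5) = Luc (k + 4) + Luc (k + 3)) by (apply Luc3; lia).
    pose proof (Wd_len (k + 1)) as W1. pose proof (Wd_len k) as W0.
    replace (k + 1 + 3) with (k + 4) in W1 by lia.
    destruct (Nat.lt_ge_cases i (Luc (k + 4))) as [H1|H1].
    + rewrite app_nth1 by lia. rewrite BR1 by auto.
      replace (k + 5) with (k + 1 + 4) by lia. apply IH; [lia|]. replace (k + 1 + 3) with (k + 4) by lia. auto.
    + rewrite app_nth2 by lia. rewrite W1.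
      destruct (Nat.lt_ge_cases (i - Luc (k + 4)) (Luc (k + 3))) as [H2|H2].
      * rewrite app_nth1 by lia.
        replace (Luc (k + 7) - 1 + i) with (Luc (k + 7) - 1 + Luc (k + 4) + (i - Luc (k + 4))) by lia.
        rewrite BR2 by auto. apply IH; lia.
      * rewrite app_nth2 by lia. rewrite W0.
        replace (Luc (k + 7) - 1 + i) with (Luc (k + 7) - 1 + Luc (k + 5) + (i - Luc (k + 4) - Luc (k + 3))) by lia.
        rewrite BR3 by lia. replace (k + 5) with (k + 1 + 4) by lia. apply IH; [lia|].
        replace (k + 1 + 3) with (k + 4) by lia. lia.
Qed.

Definition pre : list sgn := [Pl;Pl;Ze;Pl;Ze;Ze].

Fixpoint Pre (n : nat) : list sgn :=
  match n with O => pre | S m => Pre m ++ Wd m end.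

Lemma Pre_len n : length (Pre n) = Luc (n + 4) - 1.
Proof.
  induction n as [|n IH]; [reflexivity|]. simpl Pre. rewrite length_app, IH, Wd_len.
  rewrite (Luc3 (n + 3) (n + 4) (S n + 4)) by lia. pose proof (Luc_pos (n + 4)). lia.
Qed.

Theorem model n i : i < length (Pre n) -> sg i = nth i (Pre n) Pl.
Proof.
  induction n as [|n IH]; intros Hi.
  - simpl in Hi. rewrite sg_tab by lia. do 6 (destruct i as [|i]; [reflexivity|]). simpl in Hi. lia.
  - simpl Pre in *. rewrite length_app in Hi.
    destruct (Nat.lt_ge_cases i (length (Pre n))) as [H|H].
    + rewrite app_nth1 by auto. auto.
    + rewrite app_nth2 by auto. rewrite Pre_len in *. rewrite Wd_len in Hi.
      pose proof (Luc_pos (n + 4)).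
      replace i with (Luc (n + 4) - 1 + (i - (Luc (n + 4) - 1))) at 1 by lia.
      apply Bthm. lia.
Qed.

Local Close Scope R_scope.
Local Open Scope nat_scope.

Fixpoint ga (w : list bool) : nat * list nat :=
  match w with
  | [] => (0, [])
  | c :: t => let r := ga t in if c then (0, S (fst r) :: snd r) else (S (fst r), snd r)
  end.

Lemma ga_app w1 w2 : fst (ga w2) = 0 -> ga (w1 ++ w2) = (fst (ga w1), snd (ga w1) ++ snd (ga w2)).
Proof.
  intros H. induction w1 as [|c t IH]; simpl.
  - destruct (ga w2); simpl in *; subst; auto.
  - rewrite IH. destruct c; simpl; auto.
Qed.

Section Enum.
Variable P : nat -> bool.

Lemma count_S n : count_below P (S n) = count_below P n + (if P n then 1 else 0).
Proof. reflexivity. Qed.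

Lemma count_mono a b : a <= b -> count_below P a <= count_below P b.
Proof.
  induction b as [|b IH]; intros H.
  - assert (a = 0) by lia. subst. auto.
  - destruct (Nat.eq_dec a (S b)) as [->|]; auto. rewrite count_S. specialize (IH ltac:(lia)). lia.
Qed.

Lemma enum_spec N m : P N = true -> count_below P N = m -> enum1 P (S m) = N.
Proof.
  intros HP Hc. unfold enum1.
  assert (Ex : exists N', P N' = true /\ count_below P N' = (S m - 1)) by (exists N; split; auto; lia).
  pose proof (epsilon_spec (inhabits 0) _ Ex) as [HP' Hc'].
  set (e := epsilon _ _) in *.
  destruct (lt_eq_lt_dec e N) as [[H|H]|H]; auto; exfalso.
  - pose proof (count_mono (S e) N H). rewrite count_S, HP' in H0. lia.
  - pose proof (count_mono (S N) e H). rewrite count_S, HP in H0. lia.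
Qed.

Lemma count_skip a d : P a = true -> (forall i, a < i <= a + d -> P i = false) ->
  count_below P (a + S d) = count_below P a + 1.
Proof.
  intros Ha Hf. induction d as [|d IH].
  - rewrite Nat.add_1_r, count_S, Ha. auto.
  - replace (a + S (S d)) with (S (a + S d)) by lia. rewrite count_S, IH.
    + rewrite Hf by lia. lia.
    + intros i Hi. apply Hf. lia.
Qed.

Lemma ga_seq m : forall a, P (a + m) = true ->
  let r := ga (map P (seq a m)) in
  fst r <= m /\ (forall i, a <= i < a + fst r -> P i = false) /\ P (a + fst r) = true /\
  snd r = snd (ga (map P (seq (a + fst r) (m - fst r)))).
Proof.
  induction m as [|m IH]; intros a Ha.
  - simpl. repeat split; try lia. rewrite Nat.add_0_r in Ha. rewrite Nat.add_0_r. auto.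
  - simpl seq. simpl map. simpl ga. destruct (P a) eqn:Pa.
    + simpl. repeat split; try lia; rewrite ?Nat.add_0_r; auto. rewrite Pa. reflexivity.
    + specialize (IH (S a) ltac:(replace (S a + m) with (a + S m) by lia; auto)).
      cbv zeta in IH. destruct IH as [I1 [I2 [I3 I4]]].
      set (r := ga (map P (seq (S a) m))) in *. simpl fst; simpl snd.
      repeat split; try lia.
      * intros i Hi. destruct (Nat.eq_dec i a) as [->|]; auto. apply I2. lia.
      * replace (a + S (fst r)) with (S a + fst r) by lia. exact I3.
      * rewrite I4. replace (a + S (fst r)) with (S a + fst r) by lia. reflexivity.
Qed.

Theorem gaps_enum len : forall st, P st = true -> P (st + len) = true -> 0 < len ->
  forall k, k < length (snd (ga (map P (seq st len)))) ->
  enum1 P (count_below P st + k + 2) = enum1 P (count_below P st + k + 1) + nth k (snd (ga (map P (seq st len)))) 0.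
Proof.
  induction len as [len IH] using (well_founded_induction lt_wf).
  intros st Hst Hend Hlen k Hk. destruct len as [|m]; [lia|].
  simpl seq in *. simpl map in *. simpl ga in *. rewrite Hst in *.
  pose proof (ga_seq m (S st) ltac:(replace (S st + m) with (st + S m) by lia; auto)) as GS.
  cbv zeta in GS. set (r := ga (map P (seq (S st) m))) in *. destruct GS as [G1 [G2 [G3 G4]]].
  set (d := fst r) in *.
  assert (Hc : count_below P (S st + d) = count_below P st + 1).
  { replace (S st + d) with (st + S d) by lia. apply count_skip; auto. intros i Hi. apply G2. lia. }
  assert (E0 : enum1 P (count_below P st + 1) = st).
  { replace (count_below P st + 1) with (S (count_below P st)) by lia. apply enum_spec; auto. }
  assert (E1 : enum1 P (count_below P st + 2) = S st + d).
  { replace (count_below P st + 2) with (S (count_below P (S st + d))) by lia. apply enum_spec; auto. }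
  simpl snd in *. destruct k as [|k].
  - simpl nth. rewrite Nat.add_0_r. rewrite E0, E1. lia.
  - simpl nth. simpl length in Hk.
    rewrite G4 in Hk |- *.
    destruct (Nat.eq_dec (m - d) 0) as [E|E].
    { rewrite E in Hk. simpl in Hk. lia. }
    replace (S (st + d)) with (S st + d) in * by lia.
    pose proof (IH (m - d) ltac:(lia) (S st + d) G3 ltac:(replace (S st + d + (m - d)) with (st + S m) by lia; auto)
                  ltac:(lia) k ltac:(lia)) as IH'.
    rewrite Hc in IH'. replace (count_below P st + S k + 2) with (count_below P st + 1 + k + 2) by lia.
    replace (count_below P st + S k + 1) with (count_below P st + 1 + k + 1) by lia. exact IH'.
Qed.

End Enum.

Local Close Scope R_scope.
Local Open Scope nat_scope.

Definition sgn_eqb (a b : sgn) : bool :=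
  match a, b with Pl, Pl | Ze, Ze | Mi, Mi => true | _, _ => false end.

Fixpoint splt (x : sgn) (w : list sgn) : list sgn * list sgn :=
  match w with
  | [] => ([], [])
  | c :: t => if sgn_eqb c x then ([], w) else let r := splt x t in (c :: fst r, snd r)
  end.

Lemma splt_app x w : fst (splt x w) ++ snd (splt x w) = w.
Proof.
  induction w as [|c t IH]; simpl; auto. destruct (sgn_eqb c x); simpl; auto. rewrite IH. auto.
Qed.

Definition hpart x p := fst (splt x (code p)).
Definition rpart x p := snd (splt x (code p)).
Definition seg x p q := rpart x p ++ hpart x q.

Fixpoint pairs (w : list blk) (q : blk) : list (blk * blk) :=
  match w with [] => [] | p :: t => (p, hd q t) :: pairs t q end.

Definition fth (y : blk) : blk := hd ba (theta y).
Definition th2 (pq : blk * blk) : list (blk * blk) := pairs (theta (fst pq)) (fth (snd pq)).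

Lemma hd_app_ (q : blk) t w : hd q (t ++ w) = hd (hd q w) t.
Proof. destruct t; auto. Qed.

Lemma pairs_app w1 w2 q : pairs (w1 ++ w2) q = pairs w1 (hd q w2) ++ pairs w2 q.
Proof.
  induction w1 as [|p t IH]; simpl; auto. rewrite IH, hd_app_. auto.
Qed.

Lemma theta_ne y : exists z r, theta y = z :: r.
Proof. destruct y; simpl; eauto. Qed.

Lemma hd_thw q w : hd (fth q) (thw w) = fth (hd q w).
Proof.
  destruct w as [|y t]; simpl; auto. unfold thw. simpl. destruct (theta_ne y) as [z [r E]].
  rewrite E. unfold fth. rewrite E. reflexivity.
Qed.

Lemma pairs_thw w q : pairs (thw w) (fth q) = flat_map th2 (pairs w q).
Proof.
  induction w as [|p t IH]; simpl; auto.
  change (thw (p :: t)) with (theta p ++ thw t). rewrite pairs_app, hd_thw, IH. reflexivity.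
Qed.

Lemma flat_code x w q : flat_map code w ++ hpart x q =
  hpart x (hd q w) ++ flat_map (fun pq => seg x (fst pq) (snd pq)) (pairs w q).
Proof.
  induction w as [|p t IH]; simpl; auto using app_nil_r.
  rewrite <- app_assoc, IH. rewrite <- (splt_app x (code p)) at 1. unfold seg, hpart, rpart.
  rewrite <- !app_assoc. reflexivity.
Qed.

Fixpoint Tw (n : nat) : list blk := match n with O => [] | S m => Tw m ++ th m end.

Lemma Pre_Tw n : Pre n = pre ++ flat_map code (Tw n).
Proof.
  induction n as [|n IH]; [reflexivity|].
  change (Pre (S n)) with (Pre n ++ Wd n). change (Tw (S n)) with (Tw n ++ th n).
  rewrite IH, flat_map_app, app_assoc. reflexivity.
Qed.

Lemma th_ne n : exists z r, th n = z :: r.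
Proof.
  induction n as [|n IH]; simpl; eauto. destruct IH as [z [r E]]. rewrite E.
  unfold thw. simpl. destruct (theta_ne z) as [z' [r' E']]. rewrite E'. simpl. eauto.
Qed.

Definition nx (n : nat) : blk := hd ba (th n).

Lemma nx_S n : nx (S n) = fth (nx n).
Proof.
  unfold nx. simpl. destruct (th_ne n) as [z [r E]]. rewrite E.
  unfold thw. simpl. unfold fth. destruct (theta_ne z) as [z' [r' E']]. rewrite E'. reflexivity.
Qed.

Lemma Tw_S n : Tw (S n) = ba :: thw (Tw n).
Proof.
  induction n as [|n IH]; auto.
  change (Tw (S (S n))) with (Tw (S n) ++ th (S n)). rewrite IH at 1.
  change (th (S n)) with (thw (th n)). change (Tw (S n)) with (Tw n ++ th n).
  rewrite thw_app. reflexivity.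
Qed.

Lemma hd_Tw n : hd (nx n) (Tw n) = ba.
Proof. destruct n; auto. rewrite Tw_S. reflexivity. Qed.

Definition pi (n : nat) := pairs (Tw n) (nx n).

Lemma pi_S n : pi (S n) = (ba, bb) :: flat_map th2 (pi n).
Proof.
  unfold pi. rewrite Tw_S, nx_S. simpl. rewrite hd_thw, hd_Tw, pairs_thw. reflexivity.
Qed.

Lemma morph_apply_app {A} (mu : A -> list A) u w : morph_apply mu (u ++ w) = morph_apply mu u ++ morph_apply mu w.
Proof. unfold morph_apply. apply flat_map_app. Qed.

Lemma morph_iter_app {A} (mu : A -> list A) j u w : morph_iter mu j (u ++ w) = morph_iter mu j u ++ morph_iter mu j w.
Proof. induction j; simpl; auto. rewrite IHj, morph_apply_app. auto. Qed.

Lemma morph_iter_S' {A} (mu : A -> list A) j w : morph_iter mu (S j) w = morph_iter mu j (morph_apply mu w).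
Proof. induction j; simpl; auto. simpl in IHj. rewrite IHj. auto. Qed.

Lemma morph_iter_len {A} (mu : A -> list A) (Hne : forall y, mu y <> []) j w : length w <= length (morph_iter mu j w).
Proof.
  revert w. induction j; intros w; simpl; auto.
  assert (forall u, length u <= length (morph_apply mu u)).
  { induction u as [|y u IHu]; simpl; auto. unfold morph_apply in *. simpl. rewrite length_app.
    destruct (mu y) eqn:E; [exfalso; eapply Hne; eauto|]. simpl. lia. }
  specialize (IHj w). specialize (H (morph_iter mu j w)). lia.
Qed.

Lemma morph_iter_grow {A} (mu : A -> list A) (Hne : forall y, mu y <> []) a0 b r :
  mu a0 = a0 :: b :: r -> forall j, j + 1 <= length (morph_iter mu j [a0]).
Proof.
  intros E j. induction j as [|j IH]; simpl; auto.
  change (morph_apply mu (morph_iter mu j [a0])) with (morph_iter mu (S j) [a0]).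
  rewrite morph_iter_S'. unfold morph_apply. simpl. rewrite E, app_nil_r.
  change (a0 :: b :: r) with ([a0] ++ b :: r). rewrite morph_iter_app, length_app.
  pose proof (morph_iter_len mu Hne j (b :: r)). simpl in H. lia.
Qed.

Lemma map_nth_seq {A} (W : list A) d : forall a, map (fun i => nth i W d) (seq a (length W - a)) = skipn a W.
Proof.
  induction W as [|c W IH]; intros a; simpl.
  - destruct a; auto.
  - destruct a as [|a].
    + simpl. f_equal. rewrite <- seq_shift, map_map. simpl.
      specialize (IH 0). rewrite Nat.sub_0_r in IH. rewrite IH. reflexivity.
    + rewrite <- seq_shift, map_map. simpl. apply IH.
Qed.

Local Close Scope R_scope.
Local Open Scope nat_scope.

Section Gen.
Variable x : sgn.
Variable L : Type.
Variable mu : L -> list L.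
Variable phi2 : blk -> blk -> list L.
Variable tt : blk -> list L.
Variable proj : L -> nat.
Variable v : list L.
Variable inR : blk -> blk -> bool.
Variable st dk : nat.

Definition Phi (p : list (blk * blk)) : list L := flat_map (fun pq => phi2 (fst pq) (snd pq)) p.

Lemma Phi_app p1 p2 : Phi (p1 ++ p2) = Phi p1 ++ Phi p2.
Proof. unfold Phi. apply flat_map_app. Qed.

Hypothesis H_init : inR ba bb = true.
Hypothesis H_closed : forall p q, inR p q = true -> forall y, In y (th2 (p, q)) -> inR (fst y) (snd y) = true.
Hypothesis H_conj : forall p q, inR p q = true ->
  tt p ++ Phi (flat_map th2 (th2 (p, q))) = morph_apply mu (phi2 p q) ++ tt q.
Hypothesis H_v : v ++ phi2 ba bb ++ Phi (th2 (ba, bb)) = morph_apply mu v ++ tt ba.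
Hypothesis H_proj : forall p q, inR p q = true ->
  ga (map (fun c => sgn_eqb c x) (seg x p q)) = (0, map proj (phi2 p q)).
Hypothesis H_pre : ga (map (fun c => sgn_eqb c x) (skipn st (pre ++ hpart x ba))) = (0, map proj (skipn dk v)).
Hypothesis H_rpart : forall p, exists t, rpart x p = x :: t.
Hypothesis H_st : st <= length (pre ++ hpart x ba).
Hypothesis H_dk : dk <= length v.
Hypothesis H_sgst : sg st = x.

Lemma pi_R n : forall y, In y (pi n) -> inR (fst y) (snd y) = true.
Proof.
  induction n as [|n IH]; intros y Hy; [simpl in Hy; tauto|].
  rewrite pi_S in Hy. destruct Hy as [<-|Hy]; auto.
  apply in_flat_map in Hy. destruct Hy as [z [Hz Hy]]. destruct z as [p q].
  exact (H_closed p q (IH (p, q) Hz) y Hy).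
Qed.

Lemma tele w q : (forall y, In y (pairs w q) -> inR (fst y) (snd y) = true) ->
  tt (hd q w) ++ Phi (flat_map th2 (flat_map th2 (pairs w q))) = morph_apply mu (Phi (pairs w q)) ++ tt q.
Proof.
  induction w as [|p t IH]; intros HR.
  - simpl. rewrite app_nil_r. reflexivity.
  - simpl pairs. simpl flat_map. rewrite flat_map_app, Phi_app, app_assoc.
    rewrite H_conj by (apply (HR (p, hd q t)); left; auto).
    rewrite <- app_assoc. rewrite IH by (intros y Hy; apply HR; right; auto).
    change (Phi ((p, hd q t) :: pairs t q)) with (phi2 p (hd q t) ++ Phi (pairs t q)).
    rewrite morph_apply_app, app_assoc. reflexivity.
Qed.

Definition Gam n := v ++ Phi (pi n).

Lemma Gam_rec n : Gam (S (S n)) = morph_apply mu (Gam n) ++ tt (nx n).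
Proof.
  unfold Gam. rewrite !pi_S.
  change (flat_map th2 ((ba, bb) :: flat_map th2 (pi n))) with (th2 (ba, bb) ++ flat_map th2 (flat_map th2 (pi n))).
  change (Phi ((ba, bb) :: th2 (ba, bb) ++ flat_map th2 (flat_map th2 (pi n))))
    with (phi2 ba bb ++ Phi (th2 (ba, bb) ++ flat_map th2 (flat_map th2 (pi n)))).
  rewrite Phi_app. rewrite !app_assoc. rewrite <- (app_assoc v). rewrite H_v.
  rewrite <- app_assoc. rewrite <- (hd_Tw n) at 1. unfold pi. rewrite tele by apply pi_R.
  rewrite morph_apply_app, app_assoc. reflexivity.
Qed.

Lemma Gam_prefix m : exists r, Gam (2 * m) = morph_iter mu m v ++ r.
Proof.
  induction m as [|m IH].
  - exists (Phi (pi 0)). reflexivity.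
  - destruct IH as [r E]. replace (2 * S m) with (S (S (2 * m))) by lia. rewrite Gam_rec, E.
    rewrite morph_apply_app. exists (morph_apply mu r ++ tt (nx (2 * m))). rewrite app_assoc. reflexivity.
Qed.

Definition Wn n := Pre n ++ hpart x (nx n).

Lemma ga_segs p : (forall y, In y p -> inR (fst y) (snd y) = true) ->
  ga (map (fun c => sgn_eqb c x) (flat_map (fun pq => seg x (fst pq) (snd pq)) p)) = (0, map proj (Phi p)).
Proof.
  induction p as [|[a b] p IH]; intros HR; auto.
  simpl flat_map. rewrite map_app, ga_app.
  - rewrite H_proj by (apply (HR (a, b)); left; auto). rewrite IH by (intros; apply HR; right; auto).
    simpl. unfold Phi. simpl. rewrite map_app. reflexivity.
  - rewrite IH by (intros; apply HR; right; auto). reflexivity.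
Qed.

Lemma Wn_gaps n : ga (map (fun c => sgn_eqb c x) (skipn st (Wn n))) = (0, map proj (skipn dk (Gam n))).
Proof.
  unfold Wn. rewrite Pre_Tw, <- app_assoc, flat_code, hd_Tw. rewrite app_assoc.
  rewrite skipn_app. replace (st - length (pre ++ hpart x ba)) with 0 by lia. simpl skipn at 2.
  rewrite map_app, ga_app.
  - rewrite H_pre. fold (pi n). rewrite ga_segs by apply pi_R. simpl.
    unfold Gam. rewrite skipn_app. replace (dk - length v) with 0 by lia. simpl skipn at 2.
    rewrite map_app. reflexivity.
  - fold (pi n). rewrite ga_segs by apply pi_R. reflexivity.
Qed.

Lemma Wn_sg n : (forall i, i < length (Wn n) -> sg i = nth i (Wn n) Pl) /\ sg (length (Wn n)) = x.
Proof.
  assert (E : exists rest, Pre (S n) = Wn n ++ x :: rest).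
  { change (Pre (S n)) with (Pre n ++ Wd n). unfold Wd, Wn, nx.
    destruct (th_ne n) as [z [r Ez]]. rewrite Ez. simpl.
    rewrite <- (splt_app x (code z)). fold (hpart x z) (rpart x z).
    destruct (H_rpart z) as [t Et]. rewrite Et.
    exists (t ++ flat_map code r). rewrite <- !app_assoc. reflexivity. }
  destruct E as [rest E]. pose proof (model (S n)) as M. rewrite E in M.
  split.
  - intros i Hi. rewrite M by (rewrite length_app; simpl; lia). rewrite app_nth1 by auto. reflexivity.
  - rewrite M by (rewrite length_app; simpl; lia). rewrite app_nth2 by lia. rewrite Nat.sub_diag. reflexivity.
Qed.

Theorem gen_main (P : nat -> bool) (HP : forall N, P N = sgn_eqb (sg N) x)
  (Hc : count_below P st = 0) (a0 : L) (r0 : list L) (Ha0 : v = a0 :: r0)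
  (b0 : L) (r1 : list L) (Hmu0 : mu a0 = a0 :: b0 :: r1) (Hne : forall y, mu y <> []) :
  enum1 P 1 = st /\ forall k, enum1 P (k + 2) = enum1 P (k + 1) + proj (fixpt mu a0 (k + dk)).
Proof.
  split.
  - apply enum_spec; auto. rewrite HP, H_sgst. destruct x; reflexivity.
  - intros k. set (j := k + dk). set (n := 2 * S j).
    destruct (Gam_prefix (S j)) as [r E]. fold n in E.
    assert (Hfix : fixpt mu a0 j = nth j (Gam n) a0).
    { unfold fixpt. rewrite E. rewrite Ha0.
      change (a0 :: r0) with ([a0] ++ r0). rewrite morph_iter_app.
      pose proof (morph_iter_grow mu Hne a0 b0 r1 Hmu0 (S j)).
      rewrite <- !app_assoc. rewrite app_nth1 by lia. reflexivity. }
    assert (Hlen : j < length (Gam n)).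
    { rewrite E, length_app. pose proof (morph_iter_grow mu Hne a0 b0 r1 Hmu0 (S j)).
      rewrite Ha0. change (a0 :: r0) with ([a0] ++ r0). rewrite morph_iter_app, length_app. lia. }
    destruct (Wn_sg n) as [S1 S2].
    set (len := length (Wn n) - st).
    assert (Hst : st <= length (Wn n)).
    { unfold Wn. rewrite Pre_Tw, <- app_assoc, flat_code, hd_Tw, app_assoc, length_app. lia. }
    assert (Hseg : map P (seq st len) = map (fun c => sgn_eqb c x) (skipn st (Wn n))).
    { rewrite <- (map_nth_seq (Wn n) Pl st). rewrite map_map. apply map_ext_in.
      intros i Hi. apply in_seq in Hi. rewrite HP, S1 by lia. reflexivity. }
    pose proof (Wn_gaps n) as G. rewrite <- Hseg in G.
    assert (Hk : k < length (snd (ga (map P (seq st len))))).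
    { rewrite G. simpl. rewrite length_map, length_skipn. lia. }
    assert (Hlen0 : 0 < len).
    { destruct len; [simpl in Hk; lia|lia]. }
    pose proof (gaps_enum P len st ltac:(rewrite HP, H_sgst; destruct x; reflexivity)
                  ltac:(rewrite HP; replace (st + len) with (length (Wn n)) by lia; rewrite S2; destruct x; reflexivity)
                  Hlen0 k Hk) as GE.
    rewrite Hc in GE. simpl in GE. rewrite GE. f_equal.
    rewrite G. simpl. rewrite (nth_indep _ 0 (proj a0)) by (rewrite length_map, length_skipn; lia).
    rewrite map_nth. rewrite nth_skipn. rewrite Hfix. unfold j. f_equal.
    replace (dk + k) with (k + dk) by lia. apply nth_indep. lia.
Qed.

End Gen.

Local Close Scope R_scope.
Local Open Scope nat_scope.

Definition inR4 (p q : blk) : bool :=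
  match p, q with ba, bb | bb, ba | bb, bc | bc, bb => true | _, _ => false end.

Lemma closed4 : forall p q, inR4 p q = true -> forall y, In y (th2 (p, q)) -> inR4 (fst y) (snd y) = true.
Proof.
  intros [] [] H y Hy; try discriminate; vm_compute in Hy;
  repeat (destruct Hy as [<-|Hy]; [reflexivity|]); contradiction.
Qed.

Lemma HP_inc N : incp N = sgn_eqb (sg N) Pl.
Proof.
  unfold incp, sg, sgc. destruct (Nat.ltb (s_beta N) (s_beta (S N))); auto.
  destruct (Nat.eqb _ _); auto.
Qed.

Lemma HP_con N : conp N = sgn_eqb (sg N) Ze.
Proof.
  unfold conp, sg, sgc. destruct (Nat.ltb_spec (s_beta N) (s_beta (S N))).
  - destruct (Nat.eqb_spec (s_beta (S N)) (s_beta N)); auto. lia.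
  - destruct (Nat.eqb (s_beta (S N)) (s_beta N)); auto.
Qed.

Lemma HP_dec N : decp N = sgn_eqb (sg N) Mi.
Proof.
  unfold decp, sg, sgc. destruct (Nat.ltb_spec (s_beta N) (s_beta (S N))).
  - destruct (Nat.ltb_spec (s_beta (S N)) (s_beta N)); auto. lia.
  - destruct (Nat.eqb_spec (s_beta (S N)) (s_beta N)).
    + destruct (Nat.ltb_spec (s_beta (S N)) (s_beta N)); auto. lia.
    + destruct (Nat.ltb_spec (s_beta (S N)) (s_beta N)); auto. lia.
Qed.

Definition phiI (p q : blk) : list nat :=
  match p, q with
  | ba, bb => [1; 2] | bb, ba => [4; 4] | bb, bc => [4; 4] | bc, bb => [1; 2; 4; 1; 2]
  | _, _ => [] end.
Definition ttI (p : blk) : list nat := match p with bb => [1; 2] | _ => [] end.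

Lemma part_i : I_beta 1 = 0 /\ forall k, DeltaW I_beta k = Z.of_nat (fixpt mu_I 1 k).
Proof.
  assert (G := gen_main Pl nat mu_I phiI ttI (fun n => n) [1; 2; 4] inR4 0 0
    eq_refl closed4
    ltac:(intros [] [] H; try discriminate; vm_compute; reflexivity)
    ltac:(vm_compute; reflexivity)
    ltac:(intros [] [] H; try discriminate; vm_compute; reflexivity)
    ltac:(vm_compute; reflexivity)
    ltac:(intros []; eexists; vm_compute; reflexivity)
    ltac:(vm_compute; lia)
    ltac:(simpl; lia)
    ltac:(rewrite sg_tab by lia; reflexivity)
    incp HP_inc eq_refl 1 [2; 4] eq_refl 2 [] eq_refl
    ltac:(intros y; unfold mu_I; destruct y as [|[|[|[|[|y]]]]]; discriminate)).
  destruct G as [G1 G2]. unfold I_beta. split; auto.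
  intros k. unfold DeltaW. replace (S (S k)) with (k + 2) by lia. replace (S k) with (k + 1) by lia.
  rewrite G2. rewrite Nat.add_0_r. lia.
Qed.

Definition phiC (p q : blk) : list letC :=
  match p, q with
  | ba, bb => [C3] | bb, ba => [Defs.C1; C3'; C4] | bb, bc => [Defs.C1; C3'; C4] | bc, bb => [C2; Defs.C1; C4; C3]
  | _, _ => [] end.
Definition ttC (p : blk) : list letC := match p with bb => [C4; C3] | _ => [] end.

Lemma part_ii : C_beta 1 = 2 /\ forall k, DeltaW C_beta k = Z.of_nat (proj_C (fixpt mu_C C2 k)).
Proof.
  assert (G := gen_main Ze letC mu_C phiC ttC proj_C [C2; Defs.C1; C4] inR4 2 0
    eq_refl closed4
    ltac:(intros [] [] H; try discriminate; vm_compute; reflexivity)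
    ltac:(vm_compute; reflexivity)
    ltac:(intros [] [] H; try discriminate; vm_compute; reflexivity)
    ltac:(vm_compute; reflexivity)
    ltac:(intros []; eexists; vm_compute; reflexivity)
    ltac:(vm_compute; lia)
    ltac:(simpl; lia)
    ltac:(rewrite sg_tab by lia; reflexivity)
    conp HP_con
    ltac:(simpl; rewrite !HP_con, !sg_tab by lia; reflexivity)
    C2 [Defs.C1; C4] eq_refl Defs.C1 [] eq_refl
    ltac:(intros []; discriminate)).
  destruct G as [G1 G2]. unfold C_beta. split; auto.
  intros k. unfold DeltaW. replace (S (S k)) with (k + 2) by lia. replace (S k) with (k + 1) by lia.
  rewrite G2. rewrite Nat.add_0_r. lia.
Qed.

Definition phiD (p q : blk) : list nat :=
  match p, q with
  | ba, bb => [5] | bb, ba => [4; 2] | bb, bc => [4; 2] | bc, bb => [7; 5]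
  | _, _ => [] end.
Definition ttD (p : blk) : list nat := match p with bb => [5] | _ => [] end.

Lemma part_iii : D_beta 1 = 6 /\ forall k, DeltaW D_beta k = Z.of_nat (fixpt mu_D 7 (S k)).
Proof.
  assert (G := gen_main Mi nat mu_D phiD ttD (fun n => n) [7] inR4 6 1
    eq_refl closed4
    ltac:(intros [] [] H; try discriminate; vm_compute; reflexivity)
    ltac:(vm_compute; reflexivity)
    ltac:(intros [] [] H; try discriminate; vm_compute; reflexivity)
    ltac:(vm_compute; reflexivity)
    ltac:(intros []; eexists; vm_compute; reflexivity)
    ltac:(vm_compute; lia)
    ltac:(simpl; lia)
    ltac:(rewrite sg_tab by lia; reflexivity)
    decp HP_dec
    ltac:(simpl; rewrite !HP_dec, !sg_tab by lia; reflexivity)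
    7 [] eq_refl 5 [4; 2] eq_refl
    ltac:(intros y; unfold mu_D; destruct y as [|[|[|[|[|[|[|[|y]]]]]]]]; discriminate)).
  destruct G as [G1 G2]. unfold D_beta. split; auto.
  intros k. unfold DeltaW. replace (S (S k)) with (k + 2) by lia. replace (S k) with (k + 1) at 1 2 by lia.
  rewrite G2. replace (k + 1) with (S k) by lia. lia.
Qed.

Theorem theorem7 :
  (I_beta 1 = 0%nat /\
   forall k : nat, DeltaW I_beta k = Z.of_nat (fixpt mu_I 1%nat k)) /\
  (C_beta 1 = 2%nat /\
   forall k : nat, DeltaW C_beta k = Z.of_nat (proj_C (fixpt mu_C C2 k))) /\
  (D_beta 1 = 6%nat /\
   forall k : nat, DeltaW D_beta k = Z.of_nat (fixpt mu_D 7%nat (S k))).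
Proof. split; [exact part_i|split; [exact part_ii|exact part_iii]]. Qed.
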